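(* Consider the sub-$\ell^\infty$ structure on $\mathbb{R}^2$ defined by $X_1=\partial_x$, $X_2=x\partial_y$. A regular bang-bang trajectory with more than $3$ arcs is not a time-minimizer. If, moreover, a regular bang-bang trajectory $\gamma$ starts on the $y$-axis (i.e. $\gamma(0)\in\{x=0\}$) and is a time-minimizer, then it has at most $2$ arcs.
   Context: Sub-$\ell^\infty$ structure defined by smooth vector fields $X_1,\dots,X_k$ on a manifold $M$: an admissible trajectory is an absolutely continuous curve $\gamma:[0,T]\to M$ together with a measurable control $u=(u_1,\dots,u_k):[0,T]\to\mathbb{R}^k$ with $|u_i(t)|\le1$ for all $i$ and a.e. $t$, such that $\dot\gamma(t)=\sum_i u_i(t)X_i(\gamma(t))$ for a.e. $t$. It is a time-minimizer (optimal) if no admissible trajectory joins $\gamma(0)$ to $\gamma(T)$ in time less than $T$. An extremal pair is a pair $(\lambda,\gamma)$ where $\gamma$ is admissible with control $u$ and $\lambda:[0,T]\to T^*M$ is absolutely continuous with $\lambda(t)\in T^*_{\gamma(t)}M\setminus\{0\}$, such that, with $\mathcal H(\lambda,p,u)=\sum_i u_i\langle\lambda,X_i(p)\rangle$, in canonical coordinates $\dot\lambda=-\partial_p\mathcal H(\lambda,\gamma,u)$, $\dot\gamma=\partial_\lambda\mathcal H(\lambda,\gamma,u)$ a.e., and there is a constant $\lambda_0\ge0$ with $\sum_iu_i(t)\langle\lambda(t),X_i(\gamma(t))\rangle=\sum_i|\langle\lambda(t),X_i(\gamma(t))\rangle|=\lambda_0$ for a.e. $t$; $\gamma$ is then an extremal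 trajectory and $\lambda$ an extremal lift. The switching functions are $\varphi_j(t)=\langle\lambda(t),X_j(\gamma(t))\rangle$. The restriction of an extremal pair to an open interval $I$ is a regular arc if $\varphi_j(t)\ne0$ for all $t\in I$ and all $j$; arcs are taken maximal (not contained in a strictly larger open interval with the same property). A regular bang-bang trajectory is an extremal trajectory with an extremal lift such that $[0,T]$ minus finitely many points is a finite union of maximal regular arcs (on each of which the control is then constant with values in $\{1,-1\}^k$); these are its arcs. *)

(* Defs.v *)
From Stdlib Require Import Reals List.
Open Scope R_scope.

Definition open_set (O : R -> Prop) : Prop :=
  forall t, O t -> exists r, 0 < r /\ forall s, Rabs (s - t) < r -> O s.

Definition outer_le (S : R -> Prop) (c : R) : Prop :=
  forall eps, 0 < eps ->
    exists a b : nat -> R,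
      (forall n, a n <= b n) /\
      (forall t, S t -> exists n, a n < t < b n) /\
      (forall n, sum_f_R0 (fun k => b k - a k) n <= c + eps).

Definition null_set (S : R -> Prop) : Prop := outer_le S 0.

(* Lebesgue measurable set (outer regularity characterisation) *)
Definition lebesgue_measurable (E : R -> Prop) : Prop :=
  forall eps, 0 < eps ->
    exists O : R -> Prop, open_set O /\ (forall t, E t -> O t) /\
      outer_le (fun t => O t /\ ~ E t) eps.

Definition measurable_on (T : R) (u : R -> R) : Prop :=
  forall alpha, lebesgue_measurable (fun t => 0 <= t <= T /\ u t < alpha).

Definition ae_on (T : R) (P : R -> Prop) : Prop :=
  exists N : R -> Prop, null_set N /\ forall t, 0 <= t <= T -> ~ N t -> P t.

(* finite families of non-overlapping subintervals [a_i,b_i] of [lo,hi], in order *)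
Fixpoint chain (lo : R) (l : list (R * R)) (hi : R) : Prop :=
  match l with
  | nil => lo <= hi
  | (a, b) :: r => lo <= a /\ a <= b /\ chain b r hi
  end.

Definition sum_len (l : list (R * R)) : R :=
  fold_right (fun ab s => (snd ab - fst ab) + s) 0 l.

Definition sum_var (f : R -> R) (l : list (R * R)) : R :=
  fold_right (fun ab s => Rabs (f (snd ab) - f (fst ab)) + s) 0 l.

Definition abs_cont_on (T : R) (f : R -> R) : Prop :=
  forall eps, 0 < eps -> exists delta, 0 < delta /\
    forall l, chain 0 l T -> sum_len l < delta -> sum_var f l < eps.

Definition admissible (T : R) (x y u1 u2 : R -> R) : Prop :=
  0 <= T /\
  abs_cont_on T x /\ abs_cont_on T y /\
  measurable_on T u1 /\ measurable_on T u2 /\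
  ae_on T (fun t => Rabs (u1 t) <= 1 /\ Rabs (u2 t) <= 1) /\
  (* gamma' = u1 X1(gamma) + u2 X2(gamma), X1 = (1,0), X2 = (0,x) *)
  ae_on T (fun t => 0 < t < T ->
     derivable_pt_lim x t (u1 t * 1 + u2 t * 0) /\
     derivable_pt_lim y t (u1 t * 0 + u2 t * x t)).

Definition time_minimizer (T : R) (x y : R -> R) : Prop :=
  forall (T' : R) (x' y' v1 v2 : R -> R),
    admissible T' x' y' v1 v2 ->
    x' 0 = x 0 -> y' 0 = y 0 -> x' T' = x T -> y' T' = y T ->
    T <= T'.

(* Covector lambda = (p,q) in T*_gamma R^2.
   Switching functions: phi1 = <lambda, X1> = p, phi2 = <lambda, X2> = q x. *)
Definition phi1 (p : R -> R) (t : R) : R := p t.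
Definition phi2 (x q : R -> R) (t : R) : R := q t * x t.

(* H(lambda, (x,y), u) = u1 p + u2 q x ;
   lambda' = - d_(x,y) H = (- u2 q, 0), gamma' = d_lambda H = (u1, u2 x). *)
Definition extremal (T : R) (x y u1 u2 p q : R -> R) : Prop :=
  admissible T x y u1 u2 /\
  abs_cont_on T p /\ abs_cont_on T q /\
  (forall t, 0 <= t <= T -> ~ (p t = 0 /\ q t = 0)) /\
  ae_on T (fun t => 0 < t < T ->
     derivable_pt_lim p t (- (u2 t * q t)) /\
     derivable_pt_lim q t (- 0)) /\
  exists l0, 0 <= l0 /\
    ae_on T (fun t =>
      u1 t * phi1 p t + u2 t * phi2 x q t = l0 /\
      Rabs (phi1 p t) + Rabs (phi2 x q t) = l0).

Definition regular_on (x p q : R -> R) (a b : R) : Prop :=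
  forall t, a < t < b -> phi1 p t <> 0 /\ phi2 x q t <> 0.

Definition maximal_regular_arc (T : R) (x p q : R -> R) (a b : R) : Prop :=
  0 <= a /\ a < b /\ b <= T /\ regular_on x p q a b /\
  forall c d, 0 <= c -> c <= a -> b <= d -> d <= T -> (c, d) <> (a, b) ->
    ~ regular_on x p q c d.

Definition regular_bang_bang (T : R) (x y u1 u2 p q : R -> R)
    (arcs : list (R * R)) : Prop :=
  extremal T x y u1 u2 p q /\
  NoDup arcs /\
  Forall (fun ab => maximal_regular_arc T x p q (fst ab) (snd ab)) arcs /\
  exists F : list R, forall t, 0 <= t <= T ->
    In t F \/ exists ab, In ab arcs /\ fst ab < t < snd ab.

(* Main.v *)
Require Import Defs.
From Stdlib Require Import Reals Lra Lia Psatz List Classical Arith.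
Open Scope R_scope.

Lemma chain_sub : forall l lo hi lo' hi', chain lo l hi -> lo' <= lo -> hi <= hi' -> chain lo' l hi'.
Proof.
  induction l as [|[u v] r IH]; simpl; intros lo hi lo' hi' H Ha Hb; [lra|].
  destruct H as [H1 [H2 H3]]. split; [lra|split; [lra|]]. eapply IH; eauto; lra.
Qed.

Lemma chain_le : forall l lo hi, chain lo l hi -> lo <= hi.
Proof.
  induction l as [|[u v] r IH]; simpl; intros; [lra|].
  destruct H as [H1 [H2 H3]]. apply IH in H3. lra.
Qed.

Lemma chain_in : forall l lo hi, chain lo l hi ->
  Forall (fun ab => lo <= fst ab /\ fst ab <= snd ab /\ snd ab <= hi) l.
Proof.
  induction l as [|[u v] r IH]; simpl; intros; constructor.
  - destruct H as [H1 [H2 H3]]. apply chain_le in H3. simpl; lra.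
  - destruct H as [H1 [H2 H3]]. apply IH in H3.
    eapply Forall_impl; [|exact H3]. intros [c d]; simpl; lra.
Qed.

Lemma sum_len_nonneg : forall l lo hi, chain lo l hi -> 0 <= sum_len l.
Proof.
  induction l as [|[u v] r IH]; simpl; intros; [lra|].
  destruct H as [H1 [H2 H3]]. apply IH in H3. lra.
Qed.

Lemma sum_var_lip : forall (f : R -> R) M a b l lo hi,
  0 <= M ->
  (forall s t, a <= s <= b -> a <= t <= b -> Rabs (f s - f t) <= M * Rabs (s - t)) ->
  chain lo l hi -> a <= lo -> hi <= b -> sum_var f l <= M * sum_len l.
Proof.
  intros f M a b. induction l as [|[u v] r IH]; simpl; intros lo hi HM Hl Hc Ha Hb; [lra|].
  destruct Hc as [H1 [H2 H3]]. pose proof (chain_le _ _ _ H3).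
  specialize (IH v hi HM Hl H3 ltac:(lra) Hb).
  assert (Rabs (f v - f u) <= M * (v - u)).
  { replace (v - u) with (Rabs (v - u)) by (apply Rabs_right; lra). apply Hl; lra. }
  lra.
Qed.

Definition abs_cont_ab (a b : R) (f : R -> R) : Prop :=
  forall eps, 0 < eps -> exists delta, 0 < delta /\
    forall l, chain a l b -> sum_len l < delta -> sum_var f l < eps.

Lemma abs_cont_restrict : forall T f a b, abs_cont_on T f -> 0 <= a -> b <= T -> abs_cont_ab a b f.
Proof.
  intros T f a b H Ha Hb eps He. destruct (H eps He) as [d [Hd Hl]].
  exists d; split; auto. intros l Hc Hs. apply Hl; auto. eapply chain_sub; eauto.
Qed.

Lemma lip_abs_cont : forall T f M, 0 <= M ->
  (forall s t, 0 <= s <= T -> 0 <= t <= T -> Rabs (f s - f t) <= M * Rabs (s - t)) ->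
  abs_cont_on T f.
Proof.
  intros T f M HM Hl eps He. exists (eps / (M + 1)). split.
  - apply Rdiv_lt_0_compat; lra.
  - intros l Hc Hs. pose proof (sum_var_lip f M 0 T l 0 T HM Hl Hc ltac:(lra) ltac:(lra)).
    pose proof (sum_len_nonneg _ _ _ Hc).
    assert (M * sum_len l <= (M+1) * sum_len l) by nra.
    assert ((M + 1) * sum_len l < (M+1) * (eps / (M+1))) by (apply Rmult_lt_compat_l; lra).
    replace ((M + 1) * (eps / (M + 1))) with eps in H2 by (field; lra). lra.
Qed.

Lemma sum_var_opp : forall f l, sum_var (fun t => - f t) l = sum_var f l.
Proof.
  intros f; induction l as [|[u v] r IH]; simpl; auto.
  rewrite IH. f_equal. replace (- f v - - f u) with (- (f v - f u)) by ring.
  apply Rabs_Ropp.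
Qed.

Lemma abs_cont_ab_opp : forall a b f, abs_cont_ab a b f -> abs_cont_ab a b (fun t => - f t).
Proof.
  intros a b f H eps He. destruct (H eps He) as [d [Hd Hl]]. exists d; split; auto.
  intros l Hc Hs. rewrite sum_var_opp. auto.
Qed.

Fixpoint cnt_lt (n m : nat) : R :=
  match n with
  | O => if Nat.ltb 0 m then 1 else 0
  | S k => cnt_lt k m + (if Nat.ltb (S k) m then 1 else 0)
  end.

Lemma sum_fin_bound : forall (E : list R) r n, 0 < r ->
  sum_f_R0 (fun k => (if Nat.ltb k (length E) then nth k E 0 + r else 0)
                      - (if Nat.ltb k (length E) then nth k E 0 - r else 0)) n
  <= 2 * r * INR (length E).
Proof.
  intros E r n Hr.
  assert (forall n, sum_f_R0 (fun k => (if Nat.ltb k (length E) then nth k E 0 + r else 0)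
                      - (if Nat.ltb k (length E) then nth k E 0 - r else 0)) n
          = 2 * r * INR (min (S n) (length E))).
  { induction n0.
    - cbn [sum_f_R0]. destruct (Nat.ltb 0 (length E)) eqn:Hb.
      + apply Nat.ltb_lt in Hb. rewrite Nat.min_l by lia. simpl INR. lra.
      + apply Nat.ltb_ge in Hb. rewrite Nat.min_r by lia. assert (length E = 0%nat) by lia.
        rewrite H. simpl INR. lra.
    - rewrite tech5, IHn0. destruct (Nat.ltb (S n0) (length E)) eqn:Hb.
      + apply Nat.ltb_lt in Hb. rewrite !Nat.min_l by lia.
        rewrite (S_INR (S n0)). lra.
      + apply Nat.ltb_ge in Hb. rewrite !Nat.min_r by lia. lra. }
  rewrite H. apply Rmult_le_compat_l; [lra|]. apply le_INR. lia.
Qed.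

Lemma finite_cover : forall (E : list R) eps, 0 < eps ->
  exists r, 0 < r /\ exists a b : nat -> R,
    (forall n, a n <= b n) /\
    (forall e t, In e E -> Rabs (t - e) < r -> exists n, a n < t < b n) /\
    (forall n, sum_f_R0 (fun k => b k - a k) n <= eps).
Proof.
  intros E eps He. set (m := length E).
  set (r := eps / (2 * (INR m + 1))).
  assert (Hr : 0 < r). { unfold r. apply Rdiv_lt_0_compat; [lra|]. pose proof (pos_INR m). lra. }
  exists r; split; auto.
  exists (fun k => if Nat.ltb k m then nth k E 0 - r else 0).
  exists (fun k => if Nat.ltb k m then nth k E 0 + r else 0).
  split; [|split].
  - intros n. destruct (Nat.ltb n m); lra.
  - intros e t Hin Ht. destruct (In_nth E e 0 Hin) as [n [Hn He']].
    exists n. assert (Nat.ltb n m = true) by (apply Nat.ltb_lt; auto). rewrite H.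
    rewrite He'. apply Rabs_def2 in Ht. lra.
  - intros n. eapply Rle_trans; [apply (sum_fin_bound E r n Hr)|].
    fold m. unfold r. pose proof (pos_INR m).
    apply (Rmult_le_reg_r (2 * (INR m + 1))); [lra|].
    field_simplify; [|lra]. nra.
Qed.

Lemma finite_null : forall E : list R, null_set (fun t => In t E).
Proof.
  intros E eps He. destruct (finite_cover E eps He) as [r [Hr [a [b [H1 [H2 H3]]]]]].
  exists a, b. split; auto. split.
  - intros t Ht. apply (H2 t t Ht). rewrite Rminus_diag, Rabs_R0. auto.
  - intros n. specialize (H3 n). lra.
Qed.

Definition ilv (f g : nat -> R) (n : nat) : R := if Nat.even n then f (Nat.div2 n) else g (Nat.div2 n).

Lemma ilv_sum : forall f g m, sum_f_R0 (ilv f g) (S (2 * m)) = sum_f_R0 f m + sum_f_R0 g m.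
Proof.
  intros f g m. induction m.
  - simpl. unfold ilv. simpl. lra.
  - replace (S (2 * S m)) with (S (S (S (2 * m)))) by lia.
    rewrite (tech5 _ (S (S (2*m)))), (tech5 _ (S (2*m))), (tech5 f m), (tech5 g m), IHm. unfold ilv.
    replace (S (S (2 * m))) with (2 * (S m))%nat by lia.
    replace (S (2 * S m)) with (S (2 * (S m)))%nat by lia.
    assert (E1 : Nat.even (2 * S m) = true) by (rewrite Nat.even_mul; reflexivity).
    assert (E2 : Nat.even (S (2 * S m)) = false) by (rewrite Nat.even_succ, Nat.odd_mul; reflexivity).
    rewrite E1, E2, Nat.div2_double, Nat.div2_succ_double. lra.
Qed.

Lemma sum_mono : forall f n k, (forall i, 0 <= f i) -> sum_f_R0 f n <= sum_f_R0 f (n + k).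
Proof.
  intros f n k Hf. induction k.
  - rewrite Nat.add_0_r. lra.
  - replace (n + S k)%nat with (S (n + k)) by lia. rewrite tech5. specialize (Hf (S (n+k))). lra.
Qed.

Lemma null_union : forall N1 N2, null_set N1 -> null_set N2 -> null_set (fun t => N1 t \/ N2 t).
Proof.
  intros N1 N2 H1 H2 eps He.
  destruct (H1 (eps/2) ltac:(lra)) as [a1 [b1 [Ha1 [Hc1 Hs1]]]].
  destruct (H2 (eps/2) ltac:(lra)) as [a2 [b2 [Ha2 [Hc2 Hs2]]]].
  exists (ilv a1 a2), (ilv b1 b2). split; [|split].
  - intros n. unfold ilv. destruct (Nat.even n); auto.
  - intros t [Ht|Ht].
    + destruct (Hc1 t Ht) as [n Hn]. exists (2 * n)%nat. unfold ilv.
      rewrite Nat.even_mul, Nat.div2_double. simpl. auto.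
    + destruct (Hc2 t Ht) as [n Hn]. exists (S (2 * n))%nat. unfold ilv.
      rewrite Nat.even_succ, Nat.odd_mul, Nat.div2_succ_double. simpl. auto.
  - intros n.
    assert (Hnn : forall i, 0 <= ilv b1 b2 i - ilv a1 a2 i).
    { intros i. unfold ilv. destruct (Nat.even i); [specialize (Ha1 (Nat.div2 i))|specialize (Ha2 (Nat.div2 i))]; lra. }
    eapply Rle_trans. apply (sum_mono _ n (S n) Hnn).
    replace (n + S n)%nat with (S (2 * n)) by lia.
    assert (E : sum_f_R0 (fun k => ilv b1 b2 k - ilv a1 a2 k) (S (2 * n)) =
                sum_f_R0 (ilv (fun k => b1 k - a1 k) (fun k => b2 k - a2 k)) (S (2*n))).
    { apply sum_eq. intros i _. unfold ilv. destruct (Nat.even i); auto. }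
    rewrite E, ilv_sum. specialize (Hs1 n). specialize (Hs2 n). lra.
Qed.

Lemma ae_and : forall T P Q, ae_on T P -> ae_on T Q -> ae_on T (fun t => P t /\ Q t).
Proof.
  intros T P Q [N1 [Hn1 H1]] [N2 [Hn2 H2]]. exists (fun t => N1 t \/ N2 t). split.
  - apply null_union; auto.
  - intros t Ht Hn. split; [apply H1|apply H2]; auto.
Qed.

Lemma ae_mono : forall T (P Q : R -> Prop), ae_on T P -> (forall t, 0 <= t <= T -> P t -> Q t) -> ae_on T Q.
Proof.
  intros T P Q [N [Hn H]] HPQ. exists N. split; auto.
Qed.

Lemma loc_const_measurable : forall (S : R -> Prop) (E : list R),
  (forall t, ~ In t E -> exists rho, 0 < rho /\ forall s, Rabs (s - t) < rho -> (S s <-> S t)) ->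
  lebesgue_measurable S.
Proof.
  intros S E HS eps He.
  destruct (finite_cover E eps He) as [r [Hr [a [b [H1 [H2 H3]]]]]].
  exists (fun t => (exists e, In e E /\ Rabs (t - e) < r) \/ (S t /\ ~ In t E)).
  split; [|split].
  - intros t [[e [Hin Ht]]|[Ht Hn]].
    + exists (r - Rabs (t - e)). split; [lra|]. intros s Hs. left. exists e. split; auto.
      pose proof (Rabs_triang (s - t) (t - e)). replace (s - t + (t - e)) with (s - e) in H by ring. lra.
    + destruct (HS t Hn) as [rho [Hrho Hc]]. exists rho. split; auto. intros s Hs.
      destruct (classic (In s E)) as [Hi|Hi].
      * left. exists s. split; auto. rewrite Rminus_diag, Rabs_R0. auto.
      * right. split; auto. apply (Hc s Hs). auto.
  - intros t Ht. destruct (classic (In t E)) as [Hi|Hi].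
    + left. exists t. split; auto. rewrite Rminus_diag, Rabs_R0. auto.
    + right; auto.
  - intros eps' He'. exists a, b. split; auto. split.
    + intros t [[[e [Hin Ht]]|[Ht _]] Hn]; [|contradiction]. apply (H2 e t Hin Ht).
    + intros n. specialize (H3 n). lra.
Qed.

Lemma lebesgue_measurable_ext : forall S1 S2 : R -> Prop, (forall t, S1 t <-> S2 t) ->
  lebesgue_measurable S1 -> lebesgue_measurable S2.
Proof.
  intros S1 S2 Heq H eps He. destruct (H eps He) as [O [Ho [Hs Hl]]].
  exists O. split; auto. split.
  - intros t Ht. apply Hs, Heq, Ht.
  - intros e' He'. destruct (Hl e' He') as [a [b [Hab [Hc Hsum]]]].
    exists a, b. split; auto. split; auto. intros t [Ht Hn]. apply Hc. split; auto.
    intro. apply Hn, Heq. auto.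
Qed.

Lemma loc_const_fun_measurable : forall T (u : R -> R) (E : list R),
  (forall t, ~ In t E -> exists rho, 0 < rho /\ forall s, Rabs (s - t) < rho -> u s = u t) ->
  measurable_on T u.
Proof.
  intros T u E Hu alpha. apply (loc_const_measurable _ (0 :: T :: E)).
  intros t Ht. assert (t <> 0) by (intro; apply Ht; left; auto).
  assert (t <> T) by (intro; apply Ht; right; left; auto).
  assert (~ In t E) by (intro; apply Ht; right; right; auto).
  destruct (Hu t H1) as [rho [Hrho Hc]].
  exists (Rmin rho (Rmin (Rabs t) (Rabs (t - T)))). split.
  - apply Rmin_pos; auto. apply Rmin_pos; apply Rabs_pos_lt; lra.
  - intros s Hs. pose proof (Rmin_l rho (Rmin (Rabs t) (Rabs (t - T)))).
    pose proof (Rmin_r rho (Rmin (Rabs t) (Rabs (t - T)))).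
    pose proof (Rmin_l (Rabs t) (Rabs (t - T))). pose proof (Rmin_r (Rabs t) (Rabs (t - T))).
    rewrite (Hc s) by lra.
    apply Rabs_def2 in Hs. unfold Rabs in *.
    repeat match goal with |- context [Rcase_abs ?z] => destruct (Rcase_abs z) end;
    repeat match goal with H : context [Rcase_abs ?z] |- _ => destruct (Rcase_abs z) end;
    split; intros [[? ?] ?]; repeat split; try lra.
Qed.

Fixpoint tiles (Q : R -> R -> Prop) (lo : R) (l : list (R*R)) (hi : R) : Prop :=
  match l with
  | nil => lo = hi
  | (u, v) :: r => u = lo /\ u <= v /\ Q u v /\ tiles Q v r hi
  end.

Lemma tiles_app : forall Q l lo mid hi, tiles Q lo l mid -> mid <= hi -> Q mid hi ->
  tiles Q lo (l ++ (mid, hi) :: nil) hi.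
Proof.
  intros Q. induction l as [|[u v] r IH]; simpl; intros lo mid hi H1 H2 H3.
  - subst. auto.
  - destruct H1 as [? [? [? ?]]]. repeat split; auto.
Qed.

Lemma cousin : forall (Q : R -> R -> Prop) a b, a <= b ->
  (forall t, a <= t <= b -> exists rho, 0 < rho /\
     forall u v, a <= u -> u <= t -> t <= v -> v <= b -> v - u < rho -> Q u v) ->
  exists l, tiles Q a l b.
Proof.
  intros Q a b Hab Hg.
  set (E := fun s => a <= s <= b /\ exists l, tiles Q a l s).
  assert (HE : exists s, E s) by (exists a; split; [lra|exists nil; simpl; auto]).
  assert (HB : bound E) by (exists b; intros s [Hs _]; lra).
  destruct (completeness E HB HE) as [m [Hub Hlub]].
  assert (Ham : a <= m) by (apply Hub; destruct HE; unfold E; split; [lra|exists nil; simpl; auto]).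
  assert (Hmb : m <= b) by (apply Hlub; intros s [Hs _]; lra).
  destruct (Hg m ltac:(lra)) as [rho [Hrho HQ]].
  assert (Hex : exists s, E s /\ m - rho < s).
  { apply NNPP. intro Hn. assert (m <= m - rho). apply Hlub. intros s Hs.
    destruct (Rle_dec s (m - rho)); auto. exfalso. apply Hn. exists s. split; auto. lra. lra. }
  destruct Hex as [s [[Hs [l Hl]] Hs2]].
  assert (Hsm : s <= m) by (apply Hub; split; auto; exists l; auto).
  assert (Em : E m).
  { split; [lra|]. exists (l ++ (s, m) :: nil). apply tiles_app; auto. apply HQ; lra. }
  destruct (Req_dec m b) as [Heq|Hne].
  - subst m. destruct Em as [_ H]. exact H.
  - exfalso. set (m' := Rmin b (m + rho / 2)).
    assert (m < m') by (unfold m'; apply Rmin_glb_lt; lra).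
    assert (m' <= b) by apply Rmin_l. assert (m' <= m + rho/2) by apply Rmin_r.
    assert (E m').
    { destruct Em as [_ [l' Hl']]. split; [lra|]. exists (l' ++ (m, m') :: nil).
      apply tiles_app; auto; try lra. apply HQ; lra. }
    assert (m' <= m) by (apply Hub; auto). lra.
Qed.

Definition inside (uv W : R * R) : Prop := fst W <= fst uv /\ snd uv <= snd W.
Definition wlen (Wl : list (R * R)) : R := fold_right (fun W s => snd W - fst W + s) 0 Wl.

Lemma inside_sum : forall W l lo hi, chain lo l hi -> Forall (fun uv => inside uv W) l ->
  fst W <= snd W -> sum_len l <= snd W - fst W.
Proof.
  intros [al be] l lo hi Hc Hf Hle. simpl in *.
  assert (forall l lo hi, chain lo l hi -> Forall (fun uv => inside uv (al, be)) l ->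
            sum_len l + Rmax al lo <= Rmax be lo).
  { induction l0 as [|[u v] r IH]; simpl; intros lo0 hi0 H1 H2.
    - unfold Rmax; repeat destruct Rle_dec; lra.
    - destruct H1 as [? [? ?]]. inversion H2; subst. unfold inside in H5; simpl in H5.
      specialize (IH v hi0 H1 H6). revert IH. unfold Rmax; repeat destruct Rle_dec; intros; lra. }
  specialize (H l lo hi Hc Hf). revert H. unfold Rmax; repeat destruct Rle_dec; intros; lra.
Qed.


Lemma chain_split : forall (P : R * R -> Prop) l lo hi, chain lo l hi ->
  exists l1 l2, chain lo l1 hi /\ chain lo l2 hi /\ sum_len l = sum_len l1 + sum_len l2 /\
    Forall P l1 /\ Forall (fun uv => ~ P uv) l2 /\ (forall uv, In uv l1 \/ In uv l2 -> In uv l).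
Proof.
  intros P. induction l as [|[u v] r IH]; simpl; intros lo hi Hc.
  - exists nil, nil. simpl. split; [auto|split; [auto|split; [lra|split; [constructor|split; [constructor|]]]]].
    intros uv [[]|[]].
  - destruct Hc as [H1 [H2 H3]]. destruct (IH v hi H3) as [l1 [l2 [C1 [C2 [S [F1 [F2 Hin]]]]]]].
    destruct (classic (P (u, v))) as [Hp|Hp].
    + exists ((u,v)::l1), l2. simpl. split; [split; [lra|split; [lra|auto]]|].
      split; [eapply chain_sub; eauto; lra|]. split; [lra|]. split; [constructor; auto|].
      split; auto. intros uv [[E|E]|E]; auto.
    + exists l1, ((u,v)::l2). simpl. split; [eapply chain_sub; eauto; lra|].
      split; [split; [lra|split; [lra|auto]]|]. split; [lra|]. split; auto. split; [constructor; auto|].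
      intros uv [E|[E|E]]; auto.
Qed.

Lemma cover_sum : forall Wl l lo hi, chain lo l hi ->
  Forall (fun uv => exists W, In W Wl /\ inside uv W) l ->
  Forall (fun W => fst W <= snd W) Wl -> sum_len l <= wlen Wl.
Proof.
  induction Wl as [|W Wl IH]; intros l lo hi Hc Hf HW.
  - destruct l as [|uv l']; simpl; [lra|]. inversion Hf; subst. destruct H1 as [W [[] _]].
  - inversion HW; subst. destruct (chain_split (fun uv => inside uv W) l lo hi Hc)
      as [l1 [l2 [C1 [C2 [S [F1 [F2 Hin]]]]]]].
    rewrite S. simpl.
    assert (sum_len l1 <= snd W - fst W) by (eapply inside_sum; eauto).
    assert (sum_len l2 <= wlen Wl).
    { apply (IH l2 lo hi C2); auto. rewrite Forall_forall in *. intros uv Huv.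
      destruct (Hf uv (Hin uv (or_intror Huv))) as [W' [[E|E] Hi]].
      - subst. exfalso. apply (F2 uv Huv Hi).
      - exists W'; auto. }
    lra.
Qed.

Lemma abs_le_inv : forall x y, Rabs x <= y -> -y <= x <= y.
Proof. intros x y H. unfold Rabs in H. destruct (Rcase_abs x); lra. Qed.

Lemma deriv_approx : forall f t l eps, derivable_pt_lim f t l -> 0 < eps ->
  exists rho, 0 < rho /\ forall s, Rabs (s - t) < rho ->
    Rabs (f s - f t - l * (s - t)) <= eps * Rabs (s - t).
Proof.
  intros f t l eps Hd He. destruct (Hd eps He) as [[d Hdp] Hd']. exists d. split; auto.
  intros s Hs. destruct (Req_dec s t) as [E|E].
  - subst. replace (f t - f t - l * (t - t)) with 0 by ring. replace (t - t) with 0 by ring.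
    rewrite Rabs_R0. lra.
  - specialize (Hd' (s - t) ltac:(lra) Hs). simpl in Hd'.
    replace (t + (s - t)) with s in Hd' by ring.
    replace (f s - f t - l * (s - t)) with (((f s - f t) / (s - t) - l) * (s - t)) by (field; lra).
    rewrite Rabs_mult. apply Rmult_le_compat_r; [apply Rabs_pos|lra].
Qed.

Fixpoint Ilist (al be : nat -> R) (K : nat) : list (R * R) :=
  match K with
  | O => (al O, be O) :: nil
  | S k => (al (S k), be (S k)) :: Ilist al be k
  end.

Lemma Ilist_in : forall al be K n, (n <= K)%nat -> In (al n, be n) (Ilist al be K).
Proof.
  induction K; intros n Hn; simpl.
  - left. assert (n = O) by lia. subst; auto.
  - destruct (Nat.eq_dec n (S K)); [left; subst; auto|right; apply IHK; lia].
Qed.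

Lemma Ilist_wlen : forall al be K, wlen (Ilist al be K) = sum_f_R0 (fun k => be k - al k) K.
Proof.
  induction K; simpl; [unfold wlen; simpl; ring|]. unfold wlen in *. simpl. rewrite IHK. ring.
Qed.

Lemma Ilist_ok : forall al be K, (forall n, al n <= be n) -> Forall (fun W => fst W <= snd W) (Ilist al be K).
Proof. induction K; simpl; intros; constructor; simpl; auto. Qed.

Lemma deriv_le : forall a b (g G : R -> R) M (N : R -> Prop),
  a <= b -> abs_cont_ab a b g -> 0 <= M ->
  (forall s t, a <= s <= b -> a <= t <= b -> Rabs (G s - G t) <= M * Rabs (s - t)) ->
  null_set N ->
  (forall t, a < t < b -> ~ N t -> exists d e, derivable_pt_lim g t d /\ derivable_pt_lim G t e /\ d <= e) ->
  g b - g a <= G b - G a.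
Proof.
  intros a b g G M N Hab Hac HM HG HN Hd.
  set (h := fun t => g t - G t).
  assert (Main : forall eps, 0 < eps -> h b - h a <= eps * (2 * (b - a) + 1 + M)).
  { intros eps He.
    destruct (Hac eps He) as [delta [Hdel Hacl]].
    set (eta := Rmin eps delta / 10).
    assert (Heta : 0 < eta) by (unfold eta; apply Rdiv_lt_0_compat; [apply Rmin_pos|]; lra).
    assert (Heta1 : eta <= eps / 10) by (unfold eta; pose proof (Rmin_l eps delta); lra).
    assert (Heta2 : eta <= delta / 10) by (unfold eta; pose proof (Rmin_r eps delta); lra).
    destruct (HN eta Heta) as [al [be [Hab' [Hcov Hsum]]]].
    set (Bad := fun u v => (inside (u,v) (a - eta, a + eta) \/ inside (u,v) (b - eta, b + eta) \/
                  exists n, inside (u,v) (al n, be n)) /\ a <= u /\ v <= b).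
    set (Q := fun u v => h v - h u <= 2 * eps * (v - u) \/ Bad u v).
    destruct (cousin Q a b Hab) as [l Hl].
    { intros t Ht. destruct (classic (a < t < b /\ ~ N t)) as [[Ht1 Ht2]|Hnt].
      - destruct (Hd t Ht1 Ht2) as [d [e [Hdg [HdG Hde]]]].
        destruct (deriv_approx g t d eps Hdg He) as [r1 [Hr1 H1]].
        destruct (deriv_approx G t e eps HdG He) as [r2 [Hr2 H2]].
        exists (Rmin r1 r2). split; [apply Rmin_pos; auto|].
        intros u v Hu Hut Htv Hv Huv. left. unfold h.
        pose proof (Rmin_l r1 r2). pose proof (Rmin_r r1 r2).
        assert (Rabs (v - t) = v - t) by (apply Rabs_right; lra).
        assert (Rabs (u - t) = t - u) by (rewrite Rabs_left1; lra).
        assert (A1 := H1 v ltac:(lra)). assert (A2 := H2 v ltac:(lra)).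
        assert (A3 := H1 u ltac:(lra)). assert (A4 := H2 u ltac:(lra)).
        rewrite H3 in A1, A2. rewrite H4 in A3, A4.
        apply abs_le_inv in A1. apply abs_le_inv in A2. apply abs_le_inv in A3. apply abs_le_inv in A4.
        nra.
      - destruct (classic (N t)) as [HNt|HNt].
        + destruct (Hcov t HNt) as [n Hn].
          exists (Rmin (t - al n) (be n - t)). split; [apply Rmin_pos; lra|].
          intros u v Hu Hut Htv Hv Huv. right.
          pose proof (Rmin_l (t - al n) (be n - t)). pose proof (Rmin_r (t - al n) (be n - t)).
          split; [|split; lra]. right; right. exists n. unfold inside; simpl. lra.
        + assert (t = a \/ t = b) by (apply NNPP; intro; apply Hnt; split; [lra|auto]).
          exists eta. split; auto. intros u v Hu Hut Htv Hv Huv. right.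
          split; [|split; lra]. destruct H as [E|E]; subst t.
          * left. unfold inside; simpl. lra.
          * right; left. unfold inside; simpl. lra. }
    assert (Ind : forall l lo hi, tiles Q lo l hi -> exists lb, chain lo lb hi /\
                   Forall (fun uv => Bad (fst uv) (snd uv)) lb /\
                   h hi - h lo <= 2 * eps * (hi - lo) + sum_var g lb + M * sum_len lb).
    { induction l0 as [|[u v] r IH]; simpl; intros lo hi Ht.
      - subst. exists nil. simpl. split; [lra|]. split; [constructor|]. lra.
      - destruct Ht as [E [Huv [HQ Hr]]]. subst lo.
        destruct (IH v hi Hr) as [lb [Hc [Hf Hs]]].
        destruct HQ as [Hg|Hb].
        + exists lb. split; [eapply chain_sub; eauto; lra|]. split; auto. lra.
        + exists ((u, v) :: lb). simpl. split; [split; [lra|split; [lra|auto]]|].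
          split; [constructor; auto|].
          destruct Hb as [_ [Hau Hvb]].
          assert (Rabs (G v - G u) <= M * Rabs (v - u)) by (apply HG; split; lra).
          rewrite (Rabs_right (v - u)) in H by lra. apply abs_le_inv in H.
          pose proof (Rle_abs (g v - g u)). unfold h in *. nra. }
    destruct (Ind l a b Hl) as [lb [Hc [Hf Hs]]].
    assert (HK : exists K, Forall (fun uv => inside uv (a - eta, a + eta) \/ inside uv (b - eta, b + eta) \/
                   exists n, (n <= K)%nat /\ inside uv (al n, be n)) lb).
    { clear Hs Hc. induction lb as [|uv lb IH].
      - exists O. constructor.
      - inversion Hf; subst. destruct (IH H2) as [K HK].
        destruct H1 as [[H|[H|[n H]]] _].
        + exists K. constructor; auto.
        + exists K. constructor; auto.
        + exists (Nat.max K n). constructor.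
          * right; right. exists n. split; [lia|]. destruct uv; auto.
          * eapply Forall_impl; [|exact HK]. intros w [A|[A|[m [Hm A]]]]; auto.
            right; right. exists m. split; [lia|auto]. }
    destruct HK as [K HK].
    set (Wl := (a - eta, a + eta) :: (b - eta, b + eta) :: Ilist al be K).
    assert (Hlen : sum_len lb <= wlen Wl).
    { apply (cover_sum Wl lb a b Hc).
      - eapply Forall_impl; [|exact HK]. intros uv [A|[A|[n [Hn A]]]].
        + exists (a - eta, a + eta). split; [left; auto|auto].
        + exists (b - eta, b + eta). split; [right; left; auto|auto].
        + exists (al n, be n). split; [right; right; apply Ilist_in; auto|auto].
      - unfold Wl. constructor; [simpl; lra|]. constructor; [simpl; lra|]. apply Ilist_ok; auto. }
    assert (HW : wlen Wl <= 5 * eta).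
    { unfold Wl, wlen. simpl. fold (wlen (Ilist al be K)). rewrite Ilist_wlen.
      specialize (Hsum K). lra. }
    assert (Hv : sum_var g lb < eps) by (apply Hacl; auto; lra).
    pose proof (sum_len_nonneg _ _ _ Hc).
    assert (M * sum_len lb <= M * (eps / 2)) by (apply Rmult_le_compat_l; lra).
    nra. }
  assert (h b - h a <= 0).
  { apply Rnot_lt_le. intro Hlt.
    set (C := 2 * (b - a) + 1 + M).
    assert (HC : 0 < C) by (unfold C; lra).
    specialize (Main ((h b - h a) / (2 * C))).
    assert (h b - h a <= (h b - h a) / (2 * C) * C).
    { apply Main. apply Rdiv_lt_0_compat; lra. }
    replace ((h b - h a) / (2 * C) * C) with ((h b - h a) / 2) in H by (field; lra). lra. }
  unfold h in H. lra.
Qed.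

Lemma deriv_direct : forall f z l k, (forall h, h <> 0 -> (f (z + h) - f z) / h - l = k * h) ->
  derivable_pt_lim f z l.
Proof.
  intros f z l k H eps He. assert (Hp : 0 < eps / (Rabs k + 1)) by (apply Rdiv_lt_0_compat; [|pose proof (Rabs_pos k)]; lra).
  exists (mkposreal _ Hp). intros h Hh Hlt. simpl in Hlt. rewrite H by auto.
  rewrite Rabs_mult. pose proof (Rabs_pos k). pose proof (Rabs_pos h).
  apply Rle_lt_trans with ((Rabs k + 1) * Rabs h); [nra|].
  replace eps with ((Rabs k + 1) * (eps / (Rabs k + 1))) by (field; lra).
  apply Rmult_lt_compat_l; lra.
Qed.

Lemma deriv_quad : forall c d e z, derivable_pt_lim (fun s => c * s * s + d * s + e) z (2 * c * z + d).
Proof.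
  intros. apply (deriv_direct _ _ _ c). intros h Hh. field. auto.
Qed.

Lemma deriv_loc : forall f g t l l', derivable_pt_lim f t l ->
  (exists rho, 0 < rho /\ forall s, Rabs (s - t) < rho -> g s = f s) -> l = l' ->
  derivable_pt_lim g t l'.
Proof.
  intros f g t l l' Hf [rho [Hr Hg]] E. subst l'. intros eps He.
  destruct (Hf eps He) as [[d Hd] Hf']. assert (Hp : 0 < Rmin d rho) by (apply Rmin_pos; auto).
  exists (mkposreal _ Hp). intros h Hh Hlt. simpl in Hlt.
  pose proof (Rmin_l d rho). pose proof (Rmin_r d rho).
  rewrite (Hg (t + h)), (Hg t).
  - apply Hf'; auto. simpl. lra.
  - rewrite Rminus_diag, Rabs_R0. auto.
  - replace (t + h - t) with h by ring. lra.
Qed.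

Definition Fq (z : R) : R := z * Rabs z / 2.

Lemma Fq_deriv : forall z, derivable_pt_lim Fq z (Rabs z).
Proof.
  intros z. destruct (Rtotal_order z 0) as [Hz|[Hz|Hz]].
  - apply (deriv_loc (fun s => (-1/2) * s * s + 0 * s + 0) _ _ (2 * (-1/2) * z + 0)).
    + apply deriv_quad.
    + exists (- z). split; [lra|]. intros s Hs. apply Rabs_def2 in Hs. unfold Fq.
      rewrite Rabs_left by lra. field.
    + rewrite Rabs_left by lra. field.
  - subst. intros eps He. exists (mkposreal eps He). intros h Hh Hlt. simpl in Hlt. unfold Fq.
    rewrite Rplus_0_l, Rabs_R0.
    replace ((h * Rabs h / 2 - 0 * 0 / 2) / h - 0) with (Rabs h / 2) by (field; auto).
    rewrite Rabs_right; [|pose proof (Rabs_pos h); lra]. pose proof (Rabs_pos h). lra.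
  - apply (deriv_loc (fun s => (1/2) * s * s + 0 * s + 0) _ _ (2 * (1/2) * z + 0)).
    + apply deriv_quad.
    + exists z. split; [lra|]. intros s Hs. apply Rabs_def2 in Hs. unfold Fq.
      rewrite Rabs_right by lra. field.
    + rewrite Rabs_right by lra. field.
Qed.

Lemma deriv_post : forall f t l a b, derivable_pt_lim f t l ->
  derivable_pt_lim (fun s => a * f s + b) t (a * l).
Proof.
  intros f t l a b H.
  pose proof (derivable_pt_lim_plus (mult_real_fct a f) (fct_cte b) t (a * l) 0
                (derivable_pt_lim_scal f a t l H) (derivable_pt_lim_const b t)).
  replace (a * l) with (a * l + 0) by ring. exact H0.
Qed.

Definition xt (sg tau P : R) (t : R) : R := P - sg * Rabs (t - tau).
Definition K1 sg tau P x0 t := sg * (Fq (xt sg tau P t) - Fq x0).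
Definition K2 sg tau P x0 t := sg * (2 * Fq P - Fq x0 - Fq (xt sg tau P t)).
Definition Kf sg tau P x0 t := if Rle_dec t tau then K1 sg tau P x0 t else K2 sg tau P x0 t.
Definition v1f (sg tau : R) (t : R) : R := if Rlt_dec t tau then sg else - sg.
Definition v2f sg tau P (lam : R) t : R := if Rle_dec 0 (xt sg tau P t) then lam else - lam.

Lemma sg_abs : forall sg, sg * sg = 1 -> Rabs sg = 1.
Proof.
  intros sg H. destruct (Rle_dec 0 sg).
  - rewrite Rabs_right by lra. nra.
  - rewrite Rabs_left by lra. nra.
Qed.

Lemma xt_lip : forall sg tau P s t, sg * sg = 1 -> Rabs (xt sg tau P s - xt sg tau P t) <= Rabs (s - t).
Proof.
  intros. unfold xt. replace (P - sg * Rabs (s - tau) - (P - sg * Rabs (t - tau))) with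
   (- sg * (Rabs (s - tau) - Rabs (t - tau))) by ring.
  rewrite Rabs_mult, Rabs_Ropp, sg_abs by auto. rewrite Rmult_1_l.
  eapply Rle_trans; [apply Rabs_triang_inv2|]. right. f_equal. ring.
Qed.

Lemma Fq_lip : forall u v B, Rabs u <= B -> Rabs v <= B -> Rabs (Fq u - Fq v) <= B * Rabs (u - v).
Proof.
  intros u v B Hu Hv. unfold Fq.
  destruct (Rle_dec 0 u); destruct (Rle_dec 0 v);
  [rewrite (Rabs_right u) in * by lra; rewrite (Rabs_right v) in * by lra
  |rewrite (Rabs_right u) in * by lra; rewrite (Rabs_left v) in * by lra
  |rewrite (Rabs_left u) in * by lra; rewrite (Rabs_right v) in * by lra
  |rewrite (Rabs_left u) in * by lra; rewrite (Rabs_left v) in * by lra];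
  (destruct (Rle_dec 0 (u - v));
   [rewrite (Rabs_right (u - v)) by lra|rewrite (Rabs_left (u - v)) by lra]);
  match goal with |- Rabs ?e <= _ => destruct (Rle_dec 0 e);
   [rewrite (Rabs_right e) by lra|rewrite (Rabs_left e) by lra] end; nra.
Qed.

Lemma K1_K2 : forall sg tau P x0, K1 sg tau P x0 tau = K2 sg tau P x0 tau.
Proof.
  intros. unfold K1, K2, xt. rewrite Rminus_diag, Rabs_R0. replace (P - sg * 0) with P by ring. ring.
Qed.

Lemma Kf_right : forall sg tau P x0 t, tau <= t -> Kf sg tau P x0 t = K2 sg tau P x0 t.
Proof.
  intros. unfold Kf. destruct (Rle_dec t tau); auto. assert (t = tau) by lra. subst. apply K1_K2.
Qed.

Lemma xt_deriv : forall sg tau P t, t <> tau -> derivable_pt_lim (xt sg tau P) t (v1f sg tau t).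
Proof.
  intros sg tau P t Ht. unfold v1f. destruct (Rlt_dec t tau).
  - apply (deriv_loc (fun s => 0 * s * s + sg * s + (P - sg * tau)) _ _ (2 * 0 * t + sg)).
    + apply deriv_quad.
    + exists (tau - t). split; [lra|]. intros s Hs. apply Rabs_def2 in Hs. unfold xt.
      rewrite Rabs_left by lra. ring.
    + ring.
  - apply (deriv_loc (fun s => 0 * s * s + (- sg) * s + (P + sg * tau)) _ _ (2 * 0 * t + - sg)).
    + apply deriv_quad.
    + exists (t - tau). split; [lra|]. intros s Hs. apply Rabs_def2 in Hs. unfold xt.
      rewrite Rabs_right by lra. ring.
    + ring.
Qed.

Lemma Kf_deriv : forall sg tau P x0 t, sg * sg = 1 -> t <> tau ->
  derivable_pt_lim (Kf sg tau P x0) t (Rabs (xt sg tau P t)).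
Proof.
  intros sg tau P x0 t Hs Ht. destruct (Rlt_dec t tau).
  - set (f1 := fun s => 0 * s * s + sg * s + (P - sg * tau)).
    pose proof (derivable_pt_lim_comp f1 Fq t _ _ (deriv_quad 0 sg (P - sg * tau) t) (Fq_deriv (f1 t))).
    apply (deriv_post _ _ _ sg (- sg * Fq x0)) in H.
    apply (deriv_loc _ _ _ _ _ H).
    + exists (tau - t). split; [lra|]. intros s Hs'. apply Rabs_def2 in Hs'. unfold Kf, K1, xt, comp, f1.
      destruct (Rle_dec s tau); [|lra]. rewrite (Rabs_left (s - tau)) by lra.
      replace (P - sg * - (s - tau)) with (0 * s * s + sg * s + (P - sg * tau)) by ring. ring.
    + unfold f1, xt. rewrite (Rabs_left (t - tau)) by lra.
      replace (P - sg * - (t - tau)) with (0 * t * t + sg * t + (P - sg * tau)) by ring.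
      replace (sg * (Rabs (0 * t * t + sg * t + (P - sg * tau)) * (2 * 0 * t + sg)))
        with ((sg * sg) * Rabs (0 * t * t + sg * t + (P - sg * tau))) by ring.
      rewrite Hs. ring.
  - set (f1 := fun s => 0 * s * s + (- sg) * s + (P + sg * tau)).
    pose proof (derivable_pt_lim_comp f1 Fq t _ _ (deriv_quad 0 (- sg) (P + sg * tau) t) (Fq_deriv (f1 t))).
    apply (deriv_post _ _ _ (- sg) (sg * (2 * Fq P - Fq x0))) in H.
    apply (deriv_loc _ _ _ _ _ H).
    + exists (t - tau). split; [lra|]. intros s Hs'. apply Rabs_def2 in Hs'.
      rewrite Kf_right by lra. unfold K2, xt, comp, f1. rewrite (Rabs_right (s - tau)) by lra.
      replace (P - sg * (s - tau)) with (0 * s * s + - sg * s + (P + sg * tau)) by ring. ring.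
    + unfold f1, xt. rewrite (Rabs_right (t - tau)) by lra.
      replace (P - sg * (t - tau)) with (0 * t * t + - sg * t + (P + sg * tau)) by ring.
      replace (- sg * (Rabs (0 * t * t + - sg * t + (P + sg * tau)) * (2 * 0 * t + - sg)))
        with ((sg * sg) * Rabs (0 * t * t + - sg * t + (P + sg * tau))) by ring.
      rewrite Hs. ring.
Qed.

Lemma Kf_lip : forall sg tau P x0 B a b s t, sg * sg = 1 -> a <= tau <= b ->
  (forall r, a <= r <= b -> Rabs (xt sg tau P r) <= B) ->
  a <= s <= b -> a <= t <= b ->
  Rabs (Kf sg tau P x0 s - Kf sg tau P x0 t) <= B * Rabs (s - t).
Proof.
  intros sg tau P x0 B a b s t Hs Htau HB Hsr Htr.
  assert (HB0 : 0 <= B) by (specialize (HB tau Htau); pose proof (Rabs_pos (xt sg tau P tau)); lra).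
  assert (G1 : forall s t, a <= s <= b -> a <= t <= b ->
     Rabs (K1 sg tau P x0 s - K1 sg tau P x0 t) <= B * Rabs (s - t)).
  { intros s' t' Hs' Ht'. unfold K1.
    replace (sg * (Fq (xt sg tau P s') - Fq x0) - sg * (Fq (xt sg tau P t') - Fq x0))
      with (sg * (Fq (xt sg tau P s') - Fq (xt sg tau P t'))) by ring.
    rewrite Rabs_mult, sg_abs, Rmult_1_l by auto.
    eapply Rle_trans; [apply Fq_lip; apply HB; auto|].
    apply Rmult_le_compat_l; auto. apply xt_lip; auto. }
  assert (G2 : forall s t, a <= s <= b -> a <= t <= b ->
     Rabs (K2 sg tau P x0 s - K2 sg tau P x0 t) <= B * Rabs (s - t)).
  { intros s' t' Hs' Ht'. unfold K2.
    replace (sg * (2 * Fq P - Fq x0 - Fq (xt sg tau P s')) - sg * (2 * Fq P - Fq x0 - Fq (xt sg tau P t')))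
      with (- sg * (Fq (xt sg tau P s') - Fq (xt sg tau P t'))) by ring.
    rewrite Rabs_mult, Rabs_Ropp, sg_abs, Rmult_1_l by auto.
    eapply Rle_trans; [apply Fq_lip; apply HB; auto|].
    apply Rmult_le_compat_l; auto. apply xt_lip; auto. }
  unfold Kf. destruct (Rle_dec s tau); destruct (Rle_dec t tau).
  - apply G1; auto.
  - replace (K1 sg tau P x0 s - K2 sg tau P x0 t) with
      ((K1 sg tau P x0 s - K1 sg tau P x0 tau) + (K2 sg tau P x0 tau - K2 sg tau P x0 t))
      by (rewrite K1_K2; ring).
    eapply Rle_trans; [apply Rabs_triang|].
    pose proof (G1 s tau Hsr Htau). pose proof (G2 tau t Htau Htr).
    rewrite (Rabs_left1 (s - tau)) in H by lra. rewrite (Rabs_left1 (tau - t)) in H0 by lra.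
    rewrite (Rabs_left1 (s - t)) by lra. nra.
  - replace (K2 sg tau P x0 s - K1 sg tau P x0 t) with
      ((K2 sg tau P x0 s - K2 sg tau P x0 tau) + (K1 sg tau P x0 tau - K1 sg tau P x0 t))
      by (rewrite K1_K2; ring).
    eapply Rle_trans; [apply Rabs_triang|].
    pose proof (G2 s tau Hsr Htau). pose proof (G1 tau t Htau Htr).
    rewrite (Rabs_right (s - tau)) in H by lra. rewrite (Rabs_right (tau - t)) in H0 by lra.
    rewrite (Rabs_right (s - t)) by lra. nra.
  - apply G2; auto.
Qed.

Lemma tent_bound : forall x0 x1 A T' sg, ((sg = 1 /\ 0 <= x0 + x1) \/ (sg = -1 /\ x0 + x1 < 0)) ->
  Rabs x0 <= A -> Rabs x1 <= A -> 2 * A <= T' ->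
  sg * (2 * Fq (x0 + sg * ((T' + sg * (x1 - x0)) / 2)) - Fq x0 - Fq x1) >= T' * T' / 4.
Proof.
  intros x0 x1 A T' sg Hsg H0 H1 HT. apply abs_le_inv in H0. apply abs_le_inv in H1.
  destruct Hsg as [[E Hs]|[E Hs]]; subst sg.
  - replace (x0 + 1 * ((T' + 1 * (x1 - x0)) / 2)) with ((T' + x0 + x1) / 2) by field.
    unfold Fq. rewrite (Rabs_right ((T' + x0 + x1) / 2)) by lra.
    destruct (Rle_dec 0 x0); destruct (Rle_dec 0 x1);
    [rewrite (Rabs_right x0), (Rabs_right x1) by lra
    |rewrite (Rabs_right x0), (Rabs_left x1) by lra
    |rewrite (Rabs_left x0), (Rabs_right x1) by lra
    |lra]; nra.
  - replace (x0 + -1 * ((T' + -1 * (x1 - x0)) / 2)) with ((x0 + x1 - T') / 2) by field.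
    unfold Fq. rewrite (Rabs_left ((x0 + x1 - T') / 2)) by lra.
    destruct (Rle_dec 0 x0); destruct (Rle_dec 0 x1);
    [lra
    |rewrite (Rabs_right x0), (Rabs_left x1) by lra
    |rewrite (Rabs_left x0), (Rabs_right x1) by lra
    |rewrite (Rabs_left x0), (Rabs_left x1) by lra]; nra.
Qed.

Lemma competitor : forall x0 x1 y0 Y A T', 0 < A -> Rabs x0 <= A -> Rabs x1 <= A -> 2 * A <= T' ->
  Rabs Y <= T' * T' / 4 ->
  exists x' y' v1 v2, admissible T' x' y' v1 v2 /\ x' 0 = x0 /\ y' 0 = y0 /\ x' T' = x1 /\ y' T' = y0 + Y.
Proof.
  intros x0 x1 y0 Y A T' HA H0 H1 HT HY.
  set (sg := if Rle_dec 0 (x0 + x1) then 1 else -1).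
  assert (Hsgc : (sg = 1 /\ 0 <= x0 + x1) \/ (sg = -1 /\ x0 + x1 < 0)).
  { unfold sg. destruct (Rle_dec 0 (x0 + x1)); [left|right]; split; auto; lra. }
  assert (Hs : sg * sg = 1) by (destruct Hsgc as [[E _]|[E _]]; rewrite E; ring).
  set (tau := (T' + sg * (x1 - x0)) / 2).
  assert (Htau : 0 <= tau <= T').
  { apply abs_le_inv in H0. apply abs_le_inv in H1. unfold tau.
    destruct Hsgc as [[E _]|[E _]]; rewrite E; split; lra. }
  set (P := x0 + sg * tau).
  assert (Hx0 : xt sg tau P 0 = x0).
  { unfold xt, P. rewrite Rabs_left1 by lra. ring. }
  assert (Hx1 : xt sg tau P T' = x1).
  { unfold xt, P. rewrite Rabs_right by lra. unfold tau.
    replace (x0 + sg * ((T' + sg * (x1 - x0)) / 2) - sg * (T' - (T' + sg * (x1 - x0)) / 2))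
      with (x0 + (sg * sg) * (x1 - x0)) by field. rewrite Hs. ring. }
  assert (HKT : Kf sg tau P x0 T' >= T' * T' / 4).
  { rewrite Kf_right by lra. unfold K2. rewrite Hx1. unfold P, tau.
    apply (tent_bound x0 x1 A T' sg Hsgc H0 H1 HT). }
  assert (HTp : 0 < T') by lra.
  assert (HKpos : 0 < Kf sg tau P x0 T') by nra.
  set (lam := Y / Kf sg tau P x0 T').
  assert (Hlam : Rabs lam <= 1).
  { unfold lam. unfold Rdiv. rewrite Rabs_mult, Rabs_inv, (Rabs_right (Kf _ _ _ _ _)) by lra.
    apply (Rmult_le_reg_r (Kf sg tau P x0 T')); auto. rewrite Rmult_assoc, Rinv_l by lra. lra. }
  assert (HxB : forall r, 0 <= r <= T' -> Rabs (xt sg tau P r) <= Rabs x0 + T').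
  { intros r Hr. pose proof (xt_lip sg tau P r 0 Hs). rewrite Hx0 in H.
    pose proof (Rabs_triang_inv (xt sg tau P r) x0). rewrite Rminus_0_r in H.
    rewrite (Rabs_right r) in H by lra. lra. }
  exists (xt sg tau P), (fun t => y0 + lam * Kf sg tau P x0 t), (v1f sg tau), (v2f sg tau P lam).
  split; [|split; [auto|split; [|split; [auto|]]]].
  2: { simpl. unfold Kf. destruct (Rle_dec 0 tau); [|lra]. unfold K1. rewrite Hx0. ring. }
  2: { unfold lam. field. lra. }
  unfold admissible. split; [lra|]. split; [|split; [|split; [|split; [|split]]]].
  - apply (lip_abs_cont T' _ 1); [lra|]. intros s t _ _. rewrite Rmult_1_l. apply xt_lip; auto.
  - apply (lip_abs_cont T' _ (Rabs lam * (Rabs x0 + T'))).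
    + pose proof (Rabs_pos lam). pose proof (Rabs_pos x0). nra.
    + intros s t Hs' Ht'. replace (y0 + lam * Kf sg tau P x0 s - (y0 + lam * Kf sg tau P x0 t))
        with (lam * (Kf sg tau P x0 s - Kf sg tau P x0 t)) by ring.
      rewrite Rabs_mult, Rmult_assoc. apply Rmult_le_compat_l; [apply Rabs_pos|].
      apply (Kf_lip sg tau P x0 _ 0 T'); auto.
  - apply (loc_const_fun_measurable T' _ (tau :: nil)). intros t Ht.
    assert (t <> tau) by (intro; apply Ht; left; auto).
    exists (Rabs (t - tau)). split; [apply Rabs_pos_lt; lra|]. intros s Hs'.
    unfold v1f. destruct (Rlt_dec s tau); destruct (Rlt_dec t tau); auto;
    exfalso; revert Hs'; unfold Rabs; repeat destruct Rcase_abs; intros; lra.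
  - apply (loc_const_fun_measurable T' _ ((tau - sg * P) :: (tau + sg * P) :: nil)). intros t Ht.
    assert (Hnz : xt sg tau P t <> 0).
    { intro E. apply Ht. unfold xt in E.
      assert (sg * P = Rabs (t - tau)) by (replace (sg * P) with (sg * (P - sg * Rabs (t - tau)) + (sg * sg) * Rabs (t - tau)) by ring; rewrite E, Hs; ring).
      revert H. unfold Rabs. destruct Rcase_abs; intros.
      - left. lra.
      - right; left. lra. }
    exists (Rabs (xt sg tau P t)). split; [apply Rabs_pos_lt; auto|]. intros s Hs'.
    pose proof (xt_lip sg tau P s t Hs). unfold v2f.
    destruct (Rle_dec 0 (xt sg tau P s)); destruct (Rle_dec 0 (xt sg tau P t)); auto; exfalso;
    revert H Hs' Hnz; unfold Rabs; repeat destruct Rcase_abs; intros; lra.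
  - exists (fun t => In t nil). split; [apply finite_null|]. intros t _ _.
    unfold v1f, v2f. split.
    + destruct (Rlt_dec t tau); [|rewrite Rabs_Ropp]; rewrite sg_abs; auto; lra.
    + destruct (Rle_dec 0 (xt sg tau P t)); [|rewrite Rabs_Ropp]; auto.
  - exists (fun t => In t (tau :: nil)). split; [apply finite_null|]. intros t _ Hn _.
    assert (t <> tau) by (intro; apply Hn; left; auto).
    split.
    + replace (v1f sg tau t * 1 + v2f sg tau P lam t * 0) with (v1f sg tau t) by ring.
      apply xt_deriv; auto.
    + apply (deriv_loc (fun s => lam * Kf sg tau P x0 s + y0) _ _ (lam * Rabs (xt sg tau P t))).
      * apply deriv_post. apply Kf_deriv; auto.
      * exists 1. split; [lra|]. intros; ring.
      * unfold v2f. destruct (Rle_dec 0 (xt sg tau P t)).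
        -- rewrite Rabs_right by lra. ring.
        -- rewrite Rabs_left by lra. ring.
Qed.

Lemma deriv_abs_le : forall a b (g G : R -> R) M (N : R -> Prop),
  a <= b -> abs_cont_ab a b g -> 0 <= M ->
  (forall s t, a <= s <= b -> a <= t <= b -> Rabs (G s - G t) <= M * Rabs (s - t)) ->
  null_set N ->
  (forall t, a < t < b -> ~ N t -> exists d e, derivable_pt_lim g t d /\ derivable_pt_lim G t e /\ Rabs d <= e) ->
  Rabs (g b - g a) <= G b - G a.
Proof.
  intros a b g G M N Hab Hac HM HG HN Hd.
  assert (A1 : g b - g a <= G b - G a).
  { apply (deriv_le a b g G M N); auto. intros t Ht Hn. destruct (Hd t Ht Hn) as [d [e [H1 [H2 H3]]]].
    exists d, e. split; auto. split; auto. pose proof (Rle_abs d). lra. }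
  assert (A2 : - g b - - g a <= G b - G a).
  { apply (deriv_le a b (fun t => - g t) G M N); auto. apply abs_cont_ab_opp; auto.
    intros t Ht Hn. destruct (Hd t Ht Hn) as [d [e [H1 [H2 H3]]]].
    exists (- d), e. split; [|split; auto].
    - apply (deriv_loc (opp_fct g) _ _ (- d)); [apply derivable_pt_lim_opp; auto| |auto].
      exists 1; split; [lra|]. intros; unfold opp_fct; auto.
    - rewrite <- Rabs_Ropp in H3. pose proof (Rle_abs (- d)). lra. }
  unfold Rabs. destruct Rcase_abs; lra.
Qed.

Definition full (x : R -> R) (A a b : R) : Prop :=
  b = a + A /\ ((forall t, a <= t <= b -> Rabs (x t) = t - a) \/ (forall t, a <= t <= b -> Rabs (x t) = b - t)).

Lemma key_prop : forall T x y u1 u2 A a1 b1 a2 b2,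
  admissible T x y u1 u2 -> 0 < A -> 2 * A < T -> (forall t, 0 <= t <= T -> Rabs (x t) <= A) ->
  0 <= a1 -> b1 <= a2 -> b2 <= T -> full x A a1 b1 -> full x A a2 b2 -> ~ time_minimizer T x y.
Proof.
  intros T x y u1 u2 A a1 b1 a2 b2 Had HA HT2 HxA Ha1 Hb1 Hb2 F1 F2 Hmin.
  pose proof Had as Had'.
  destruct Had as [HT [Hxac [Hyac [_ [_ [Hbnd Hder]]]]]].
  destruct (ae_and _ _ _ Hbnd Hder) as [N [HN HNP]].
  assert (Hyd : forall t, 0 < t < T -> ~ N t -> Rabs (u2 t) <= 1 /\
            derivable_pt_lim y t (u1 t * 0 + u2 t * x t)).
  { intros t Ht Hn. destruct (HNP t ltac:(lra) Hn) as [[_ H2] H3]. split; auto. apply H3; auto. }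
  assert (PA : forall c d, 0 <= c <= d -> d <= T -> Rabs (y d - y c) <= A * (d - c)).
  { intros c d Hc Hd.
    replace (A * (d - c)) with ((fun s => A * s) d - (fun s => A * s) c) by ring.
    apply (deriv_abs_le c d y _ A N); try lra.
    - apply (abs_cont_restrict T); auto; lra.
    - intros s t _ _. replace (A * s - A * t) with (A * (s - t)) by ring.
      rewrite Rabs_mult, Rabs_right by lra. lra.
    - auto.
    - intros t Ht Hn. destruct (Hyd t ltac:(lra) Hn) as [Hu Hdy].
      exists (u1 t * 0 + u2 t * x t), A. split; auto. split.
      + apply (deriv_loc (fun s => 0 * s * s + A * s + 0) _ _ (2 * 0 * t + A)); [apply deriv_quad| |ring].
        exists 1; split; [lra|]. intros; ring.
      + replace (u1 t * 0 + u2 t * x t) with (u2 t * x t) by ring. rewrite Rabs_mult.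
        pose proof (HxA t ltac:(lra)). pose proof (Rabs_pos (u2 t)). pose proof (Rabs_pos (x t)). nra. }
  assert (PF : forall a b, 0 <= a -> b <= T -> full x A a b -> Rabs (y b - y a) <= A * A / 2).
  { intros a b Ha Hb [Eb [Hl|Hl]].
    - replace (A * A / 2) with ((fun s => (1/2) * s * s + (- a) * s + a * a / 2) b
                              - (fun s => (1/2) * s * s + (- a) * s + a * a / 2) a) by (rewrite Eb; field).
      apply (deriv_abs_le a b y (fun s => (1/2) * s * s + (- a) * s + a * a / 2) A N); try lra.
      + apply (abs_cont_restrict T); auto.
      + intros s t Hs Ht. replace ((1/2) * s * s + (- a) * s + a * a / 2 - ((1/2) * t * t + (- a) * t + a * a / 2))
          with ((s - t) * ((s + t) / 2 - a)) by field.
        rewrite Rabs_mult, (Rmult_comm A). apply Rmult_le_compat_l; [apply Rabs_pos|].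
        apply Rabs_le. lra.
      + auto.
      + intros t Ht Hn. destruct (Hyd t ltac:(lra) Hn) as [Hu Hdy].
        exists (u1 t * 0 + u2 t * x t), (t - a). split; auto. split.
        * apply (deriv_loc _ _ _ _ _ (deriv_quad (1/2) (- a) (a * a / 2) t)); [|field].
          exists 1; split; [lra|]. intros; ring.
        * replace (u1 t * 0 + u2 t * x t) with (u2 t * x t) by ring. rewrite Rabs_mult.
          rewrite (Hl t) by lra. pose proof (Rabs_pos (u2 t)). nra.
    - replace (A * A / 2) with ((fun s => (-1/2) * s * s + b * s - b * b / 2) b
                              - (fun s => (-1/2) * s * s + b * s - b * b / 2) a)
        by (replace a with (b - A) by lra; field).
      apply (deriv_abs_le a b y (fun s => (-1/2) * s * s + b * s - b * b / 2) A N); try lra.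
      + apply (abs_cont_restrict T); auto.
      + intros s t Hs Ht. replace ((-1/2) * s * s + b * s - b * b / 2 - ((-1/2) * t * t + b * t - b * b / 2))
          with ((s - t) * (b - (s + t) / 2)) by field.
        rewrite Rabs_mult, (Rmult_comm A). apply Rmult_le_compat_l; [apply Rabs_pos|].
        apply Rabs_le. lra.
      + auto.
      + intros t Ht Hn. destruct (Hyd t ltac:(lra) Hn) as [Hu Hdy].
        exists (u1 t * 0 + u2 t * x t), (b - t). split; auto. split.
        * apply (deriv_loc (fun s => (-1/2) * s * s + b * s + (- (b * b / 2))) _ _ (2 * (-1/2) * t + b));
            [apply deriv_quad| |field].
          exists 1; split; [lra|]. intros; ring.
        * replace (u1 t * 0 + u2 t * x t) with (u2 t * x t) by ring. rewrite Rabs_mult.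
          rewrite (Hl t) by lra. pose proof (Rabs_pos (u2 t)). nra. }
  destruct F1 as [E1 F1']. destruct F2 as [E2 F2'].
  assert (HY : Rabs (y T - y 0) <= A * T - A * A).
  { pose proof (PA 0 a1 ltac:(lra) ltac:(lra)).
    pose proof (PF a1 b1 Ha1 ltac:(lra) (conj E1 F1')).
    pose proof (PA b1 a2 ltac:(lra) ltac:(lra)).
    pose proof (PF a2 b2 ltac:(lra) Hb2 (conj E2 F2')).
    pose proof (PA b2 T ltac:(lra) ltac:(lra)).
    replace (y T - y 0) with ((y a1 - y 0) + (y b1 - y a1) + (y a2 - y b1) + (y b2 - y a2) + (y T - y b2)) by ring.
    eapply Rle_trans; [apply Rabs_triang|]. eapply Rle_trans; [apply Rplus_le_compat_r; apply Rabs_triang|].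
    eapply Rle_trans; [apply Rplus_le_compat_r; apply Rplus_le_compat_r; apply Rabs_triang|].
    eapply Rle_trans; [apply Rplus_le_compat_r; apply Rplus_le_compat_r; apply Rplus_le_compat_r; apply Rabs_triang|].
    nra. }
  set (e := (T - 2 * A) * (T - 2 * A) / (2 * T)).
  assert (HeT : e * T = (T - 2 * A) * (T - 2 * A) / 2) by (unfold e; field; lra).
  assert (He0 : 0 < e) by (unfold e; apply Rdiv_lt_0_compat; nra).
  assert (HT' : 2 * A <= T - e).
  { assert (e * (2 * T) = (T - 2 * A) * (T - 2 * A)) by (unfold e; field; lra). nra. }
  assert (HYb : Rabs (y T - y 0) <= (T - e) * (T - e) / 4) by nra.
  destruct (competitor (x 0) (x T) (y 0) (y T - y 0) A (T - e) HA
             (HxA 0 ltac:(lra)) (HxA T ltac:(lra)) HT' HYb) as [x' [y' [v1 [v2 [Hadm [E0 [E0' [E3 E4]]]]]]]].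
  pose proof (Hmin (T - e) x' y' v1 v2 Hadm E0 E0' E3 ltac:(rewrite E4; ring)). lra.
Qed.

Definition wcont (T : R) (f : R -> R) : Prop :=
  forall t, 0 <= t <= T -> forall eps, 0 < eps -> exists delta, 0 < delta /\
    forall s, 0 <= s <= T -> Rabs (s - t) < delta -> Rabs (f s - f t) < eps.

Lemma abs_cont_wcont : forall T f, abs_cont_on T f -> wcont T f.
Proof.
  intros T f H t Ht eps He. destruct (H eps He) as [d [Hd Hl]]. exists d. split; auto.
  intros s Hs Hst. destruct (Rle_dec s t).
  - assert (Hc : chain 0 ((s, t) :: nil) T) by (simpl; lra).
    specialize (Hl _ Hc). simpl in Hl. rewrite Rabs_left1 in Hst by lra.
    assert (sum_var f ((s,t)::nil) < eps) by (apply Hl; simpl; lra).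
    simpl in H0. rewrite Rabs_minus_sym. lra.
  - assert (Hc : chain 0 ((t, s) :: nil) T) by (simpl; lra).
    specialize (Hl _ Hc). simpl in Hl. rewrite Rabs_right in Hst by lra.
    assert (sum_var f ((t,s)::nil) < eps) by (apply Hl; simpl; lra).
    simpl in H0. lra.
Qed.

Lemma lip_abs_cont_ab : forall a b f M, 0 <= M ->
  (forall s t, a <= s <= b -> a <= t <= b -> Rabs (f s - f t) <= M * Rabs (s - t)) ->
  abs_cont_ab a b f.
Proof.
  intros a b f M HM Hl eps He. exists (eps / (M + 1)). split.
  - apply Rdiv_lt_0_compat; lra.
  - intros l Hc Hs. pose proof (sum_var_lip f M a b l a b HM Hl Hc ltac:(lra) ltac:(lra)).
    pose proof (sum_len_nonneg _ _ _ Hc).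
    assert (M * sum_len l <= (M+1) * sum_len l) by nra.
    assert ((M + 1) * sum_len l < (M+1) * (eps / (M+1))) by (apply Rmult_lt_compat_l; lra).
    replace ((M + 1) * (eps / (M + 1))) with eps in H2 by (field; lra). lra.
Qed.

Lemma no_interior : forall N a b, null_set N -> a < b -> (forall t, a < t < b -> N t) -> False.
Proof.
  intros N a b HN Hab HI.
  assert (2 * b - 2 * a <= b - a).
  { apply (deriv_le a b (fun t => 2 * t) (fun t => t) 1 N); try lra; auto.
    - apply (lip_abs_cont_ab a b _ 2); [lra|]. intros s t _ _.
      replace (2 * s - 2 * t) with (2 * (s - t)) by ring. rewrite Rabs_mult, Rabs_right; lra.
    - intros s t _ _. lra.
    - intros t Ht Hn. exfalso. apply Hn. auto. }
  lra.
Qed.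

Lemma ae_cont_eq : forall T f c, 0 < T -> wcont T f -> ae_on T (fun t => f t = c) ->
  forall t, 0 <= t <= T -> f t = c.
Proof.
  intros T f c HT Hf [N [HN HP]] t Ht. apply NNPP. intro Hne.
  assert (He : 0 < Rabs (f t - c)) by (apply Rabs_pos_lt; lra).
  destruct (Hf t Ht _ He) as [d [Hd Hs]].
  apply (no_interior N (Rmax 0 (t - d/2)) (Rmin T (t + d/2)) HN).
  - unfold Rmax, Rmin. repeat destruct Rle_dec; lra.
  - intros s [Hs1 Hs2]. apply NNPP. intro Hn.
    assert (Hs0 : 0 <= s <= T).
    { pose proof (Rmax_l 0 (t - d/2)). pose proof (Rmin_l T (t + d/2)). lra. }
    assert (Rabs (s - t) < d).
    { pose proof (Rmax_r 0 (t - d/2)). pose proof (Rmin_r T (t + d/2)). apply Rabs_def1; lra. }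
    specialize (Hs s Hs0 H). specialize (HP s Hs0 Hn). rewrite HP in Hs.
    rewrite Rabs_minus_sym in Hs. lra.
Qed.

Lemma wcont_comb : forall T f g k, wcont T f -> wcont T g ->
  wcont T (fun t => Rabs (f t) + k * Rabs (g t)).
Proof.
  intros T f g k Hf Hg t Ht eps He.
  destruct (Hf t Ht (eps / 2) ltac:(lra)) as [d1 [Hd1 H1]].
  destruct (Hg t Ht (eps / (2 * (Rabs k + 1)))) as [d2 [Hd2 H2]].
  { apply Rdiv_lt_0_compat; [lra|]. pose proof (Rabs_pos k). lra. }
  exists (Rmin d1 d2). split; [apply Rmin_pos; auto|]. intros s Hs Hst.
  pose proof (Rmin_l d1 d2). pose proof (Rmin_r d1 d2).
  specialize (H1 s Hs ltac:(lra)). specialize (H2 s Hs ltac:(lra)).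
  replace (Rabs (f s) + k * Rabs (g s) - (Rabs (f t) + k * Rabs (g t)))
    with ((Rabs (f s) - Rabs (f t)) + k * (Rabs (g s) - Rabs (g t))) by ring.
  eapply Rle_lt_trans; [apply Rabs_triang|]. rewrite Rabs_mult.
  pose proof (Rabs_triang_inv2 (f s) (f t)). pose proof (Rabs_triang_inv2 (g s) (g t)).
  pose proof (Rabs_pos k).
  assert (Hk : Rabs k * Rabs (Rabs (g s) - Rabs (g t)) <= (Rabs k + 1) * (eps / (2 * (Rabs k + 1)))).
  { pose proof (Rabs_pos (Rabs (g s) - Rabs (g t))). nra. }
  replace ((Rabs k + 1) * (eps / (2 * (Rabs k + 1)))) with (eps / 2) in Hk by (field; lra).
  lra.
Qed.

Definition clamp (a b r : R) : R := Rmax a (Rmin r b).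

Lemma clamp_in : forall a b r, a <= b -> a <= clamp a b r <= b.
Proof. intros. unfold clamp, Rmax, Rmin. repeat destruct Rle_dec; lra. Qed.

Lemma clamp_lip : forall a b r s, a <= b -> Rabs (clamp a b r - clamp a b s) <= Rabs (r - s).
Proof.
  intros. unfold clamp, Rmax, Rmin. repeat destruct Rle_dec; unfold Rabs; repeat destruct Rcase_abs; lra.
Qed.

Lemma clamp_id : forall a b r, a <= r <= b -> clamp a b r = r.
Proof. intros. unfold clamp, Rmax, Rmin. repeat destruct Rle_dec; lra. Qed.

Lemma ivt_sign : forall T f a b, wcont T f -> 0 <= a -> a < b -> b <= T ->
  (forall t, a < t < b -> f t <> 0) -> forall s t, a < s < b -> a < t < b -> 0 < f s * f t.
Proof.
  intros T f a b Hf Ha Hab Hb Hnz.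
  set (g := fun r => f (clamp a b r)).
  assert (Hg : continuity g).
  { intros r. unfold continuity_pt, continue_in, limit1_in, limit_in. simpl. unfold R_dist.
    intros eps He. pose proof (clamp_in a b r ltac:(lra)).
    destruct (Hf (clamp a b r) ltac:(lra) eps He) as [d [Hd Hs]].
    exists d. split; auto. intros r' [_ Hr']. unfold g. apply Hs.
    - pose proof (clamp_in a b r' ltac:(lra)). lra.
    - eapply Rle_lt_trans; [apply clamp_lip; lra|]. auto. }
  assert (Key : forall s t, a < s < b -> a < t < b -> s < t -> 0 < f s * f t).
  { intros s t Hs Ht Hst. apply Rnot_le_lt. intro Hle.
    assert (Hfs := Hnz s Hs). assert (Hft := Hnz t Ht).
    assert (Hgs : g s = f s) by (unfold g; rewrite clamp_id; lra).
    assert (Hgt : g t = f t) by (unfold g; rewrite clamp_id; lra).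
    destruct (Rlt_dec (f s) 0).
    - assert (0 < f t) by (destruct (Rtotal_order (f t) 0) as [?|[?|?]]; nra).
      destruct (IVT g s t Hg Hst ltac:(lra) ltac:(lra)) as [z [Hz Hgz]].
      unfold g in Hgz. rewrite clamp_id in Hgz by lra. apply (Hnz z); auto; lra.
    - assert (0 < f s) by lra. assert (f t < 0) by (destruct (Rtotal_order (f t) 0) as [?|[?|?]]; nra).
      destruct (IVT (opp_fct g) s t (continuity_opp g Hg) Hst) as [z [Hz Hgz]];
        unfold opp_fct; try lra.
      unfold opp_fct, g in Hgz. rewrite clamp_id in Hgz by lra. apply (Hnz z); [lra|]. lra. }
  intros s t Hs Ht. destruct (Rtotal_order s t) as [H|[H|H]].
  - apply Key; auto.
  - subst. assert (Hfs := Hnz t Ht). destruct (Rtotal_order (f t) 0) as [?|[?|?]]; nra.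
  - rewrite Rmult_comm. apply Key; auto.
Qed.

Lemma sum_var_sub_lin : forall f k l lo hi, chain lo l hi ->
  sum_var (fun s => f s - k * s) l <= sum_var f l + Rabs k * sum_len l.
Proof.
  intros f k. induction l as [|[u v] r IH]; simpl; intros lo hi Hc; [lra|].
  destruct Hc as [H1 [H2 H3]]. specialize (IH _ _ H3).
  replace (f v - k * v - (f u - k * u)) with ((f v - f u) + (- k) * (v - u)) by ring.
  pose proof (Rabs_triang (f v - f u) (- k * (v - u))). rewrite Rabs_mult, Rabs_Ropp in H.
  rewrite (Rabs_right (v - u)) in H by lra. nra.
Qed.

Lemma abs_cont_ab_sub_lin : forall a b f k, abs_cont_ab a b f -> abs_cont_ab a b (fun s => f s - k * s).
Proof.
  intros a b f k H eps He. destruct (H (eps / 2) ltac:(lra)) as [d [Hd Hl]].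
  assert (Hp : 0 < eps / (2 * (Rabs k + 1))) by (apply Rdiv_lt_0_compat; [|pose proof (Rabs_pos k)]; lra).
  exists (Rmin d (eps / (2 * (Rabs k + 1)))). split; [apply Rmin_pos; auto|].
  intros l Hc Hs. pose proof (Rmin_l d (eps / (2 * (Rabs k + 1)))). pose proof (Rmin_r d (eps / (2 * (Rabs k + 1)))).
  pose proof (sum_var_sub_lin f k l a b Hc). specialize (Hl l Hc ltac:(lra)).
  pose proof (sum_len_nonneg _ _ _ Hc). pose proof (Rabs_pos k).
  assert (Rabs k * sum_len l <= (Rabs k + 1) * (eps / (2 * (Rabs k + 1)))) by nra.
  replace ((Rabs k + 1) * (eps / (2 * (Rabs k + 1)))) with (eps / 2) in H5 by (field; lra).
  lra.
Qed.

Lemma mul_le_abs : forall u z, Rabs u <= 1 -> u * z <= Rabs z.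
Proof.
  intros u z Hu. apply abs_le_inv in Hu. unfold Rabs. destruct Rcase_abs; nra.
Qed.

Lemma nz_near : forall T f t, wcont T f -> 0 <= t <= T -> f t <> 0 ->
  exists d, 0 < d /\ forall s, 0 <= s <= T -> Rabs (s - t) < d -> f s <> 0.
Proof.
  intros T f t Hf Ht Hnz. destruct (Hf t Ht (Rabs (f t)) (Rabs_pos_lt _ Hnz)) as [d [Hd H]].
  exists d. split; auto. intros s Hs Hst E. specialize (H s Hs Hst). rewrite E in H.
  rewrite Rminus_0_l, Rabs_Ropp in H. lra.
Qed.

Lemma arc_full : forall T (x p q u1 u2 : R -> R) c l0 (N0 : R -> Prop) a b,
  0 < T ->
  (forall t, 0 <= t <= T -> q t = c) ->
  wcont T p -> wcont T x -> abs_cont_on T x ->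
  (forall t, 0 <= t <= T -> Rabs (p t) + Rabs c * Rabs (x t) = l0) ->
  null_set N0 ->
  (forall t, 0 <= t <= T -> ~ N0 t -> Rabs (u1 t) <= 1 /\ Rabs (u2 t) <= 1 /\
     (0 < t < T -> derivable_pt_lim x t (u1 t * 1 + u2 t * 0)) /\
     u1 t * p t + u2 t * (q t * x t) = Rabs (p t) + Rabs (q t * x t)) ->
  maximal_regular_arc T x p q a b ->
  c <> 0 /\ 0 < l0 /\ (b < T -> (0 < a \/ x a = 0) -> full x (l0 / Rabs c) a b).
Proof.
  intros T x p q u1 u2 c l0 N0 a b HT Hq Hp Hx Hxac HH HN0 HF [Ha0 [Hab [HbT [Hreg Hmax]]]].
  set (m := (a + b) / 2).
  assert (Hm : a < m < b) by (unfold m; lra).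
  destruct (Hreg m Hm) as [Hpm Hqm]. unfold phi1, phi2 in *.
  assert (Hc : c <> 0). { rewrite Hq in Hqm by lra. intro E; apply Hqm; rewrite E; ring. }
  assert (Hcp : 0 < Rabs c) by (apply Rabs_pos_lt; auto).
  assert (Hl0 : 0 < l0).
  { rewrite <- (HH m) by lra. pose proof (Rabs_pos_lt _ Hpm). pose proof (Rabs_pos (x m)). nra. }
  split; auto. split; auto.
  set (A := l0 / Rabs c).
  assert (HpA : forall t, 0 <= t <= T -> p t = 0 -> Rabs (x t) = A).
  { intros t Ht E. pose proof (HH t Ht). rewrite E, Rabs_R0 in H. unfold A. field_simplify; [|lra].
    rewrite <- H. field. lra. }
  assert (Hin : forall t, a < t < b -> p t <> 0 /\ x t <> 0).
  { intros t Ht. destruct (Hreg t Ht) as [H1 H2]. unfold phi1, phi2 in *. split; auto.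
    intro E; apply H2; rewrite E; ring. }
  assert (Hsg : forall t, a < t < b -> 0 < p m * p t).
  { intros t Ht. apply (ivt_sign T p a b Hp Ha0 Hab HbT); auto. intros t' Ht'. apply Hin; auto. }
  set (sg := if Rlt_dec 0 (p m) then 1 else -1).
  assert (Hsg2 : sg * sg = 1) by (unfold sg; destruct Rlt_dec; ring).
  assert (Hu1 : forall t, a < t < b -> ~ N0 t -> u1 t = sg).
  { intros t Ht Hn. destruct (HF t ltac:(lra) Hn) as [H1 [H2 [_ H4]]].
    pose proof (mul_le_abs (u1 t) (p t) H1). pose proof (mul_le_abs (u2 t) (q t * x t) H2).
    assert (E : u1 t * p t = Rabs (p t)) by lra.
    pose proof (Hsg t Ht). unfold sg. destruct (Rlt_dec 0 (p m)).
    - assert (0 < p t) by nra. rewrite Rabs_right in E by lra.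
      apply (Rmult_eq_reg_r (p t)); lra.
    - assert (p m < 0) by (destruct (Rtotal_order (p m) 0) as [?|[?|?]]; [auto|contradiction|lra]).
      assert (p t < 0) by nra. rewrite Rabs_left in E by lra.
      apply (Rmult_eq_reg_r (p t)); lra. }
  assert (Hlin : forall t, a <= t <= b -> x t = x a + sg * (t - a)).
  { intros t Ht.
    assert (Rabs ((x t - sg * t) - (x a - sg * a)) <= (fun _ => 0) t - (fun _ => 0) a).
    { apply (deriv_abs_le a t (fun s => x s - sg * s) (fun _ => 0) 0 N0); try lra; auto.
      - apply abs_cont_ab_sub_lin. apply (abs_cont_restrict T); auto; lra.
      - intros; rewrite Rminus_diag, Rabs_R0. lra.
      - intros s Hs Hn. destruct (HF s ltac:(lra) Hn) as [_ [_ [Hd _]]].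
        specialize (Hd ltac:(lra)). rewrite (Hu1 s ltac:(lra) Hn) in Hd.
        exists 0, 0. split; [|split; [|rewrite Rabs_R0; lra]].
        + apply (deriv_loc (minus_fct x (fun s => 0 * s * s + sg * s + 0)) _ _ (sg * 1 + u2 s * 0 - (2 * 0 * s + sg))).
          * apply derivable_pt_lim_minus; auto. apply deriv_quad.
          * exists 1; split; [lra|]. intros; unfold minus_fct; ring.
          * ring.
        + apply (deriv_loc (fct_cte 0) _ _ 0); [apply derivable_pt_lim_const| |auto].
          exists 1; split; [lra|]. intros; unfold fct_cte; auto. }
    simpl in H. apply abs_le_inv in H. lra. }
  assert (Hend_b : b < T -> p b = 0 \/ x b = 0).
  { intros HbT'. apply NNPP. intro Hn.
    assert (Hpb : p b <> 0) by (intro; apply Hn; auto).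
    assert (Hxb : x b <> 0) by (intro; apply Hn; auto).
    destruct (nz_near T p b Hp ltac:(lra) Hpb) as [d1 [Hd1 H1]].
    destruct (nz_near T x b Hx ltac:(lra) Hxb) as [d2 [Hd2 H2]].
    set (d := Rmin T (b + Rmin d1 d2 / 2)).
    assert (Hd : b < d <= T).
    { unfold d. pose proof (Rmin_pos d1 d2 Hd1 Hd2). split; [apply Rmin_glb_lt; lra|apply Rmin_l]. }
    apply (Hmax a d); try lra.
    - intro E. injection E. lra.
    - intros t Ht. unfold phi1, phi2. destruct (Rlt_dec t b).
      + destruct (Hin t ltac:(lra)) as [A1 A2]. rewrite Hq by lra. split; auto;
        try (intro E; apply A2; apply (Rmult_eq_reg_l c); lra).
      + assert (Hts : Rabs (t - b) < Rmin d1 d2).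
        { pose proof (Rmin_r T (b + Rmin d1 d2 / 2)). pose proof (Rmin_pos d1 d2 Hd1 Hd2).
          fold d in H. rewrite Rabs_right by lra. lra. }
        pose proof (Rmin_l d1 d2). pose proof (Rmin_r d1 d2).
        assert (A1 := H1 t ltac:(lra) ltac:(lra)). assert (A2 := H2 t ltac:(lra) ltac:(lra)).
        rewrite Hq by lra. split; auto; try (intro E; apply A2; apply (Rmult_eq_reg_l c); lra). }
  assert (Hend_a : 0 < a -> p a = 0 \/ x a = 0).
  { intros Ha'. apply NNPP. intro Hn.
    assert (Hpa : p a <> 0) by (intro; apply Hn; auto).
    assert (Hxa : x a <> 0) by (intro; apply Hn; auto).
    destruct (nz_near T p a Hp ltac:(lra) Hpa) as [d1 [Hd1 H1]].
    destruct (nz_near T x a Hx ltac:(lra) Hxa) as [d2 [Hd2 H2]].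
    set (d := Rmax 0 (a - Rmin d1 d2 / 2)).
    assert (Hd : 0 <= d < a).
    { unfold d. pose proof (Rmin_pos d1 d2 Hd1 Hd2). split; [apply Rmax_l|apply Rmax_lub_lt; lra]. }
    apply (Hmax d b); try lra.
    - intro E. injection E. lra.
    - intros t Ht. unfold phi1, phi2. destruct (Rlt_dec a t).
      + destruct (Hin t ltac:(lra)) as [A1 A2]. rewrite Hq by lra. split; auto;
        try (intro E; apply A2; apply (Rmult_eq_reg_l c); lra).
      + assert (Hts : Rabs (t - a) < Rmin d1 d2).
        { pose proof (Rmax_r 0 (a - Rmin d1 d2 / 2)). pose proof (Rmin_pos d1 d2 Hd1 Hd2).
          fold d in H. rewrite Rabs_left1 by lra. lra. }
        pose proof (Rmin_l d1 d2). pose proof (Rmin_r d1 d2).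
        assert (A1 := H1 t ltac:(lra) ltac:(lra)). assert (A2 := H2 t ltac:(lra) ltac:(lra)).
        rewrite Hq by lra. split; auto; try (intro E; apply A2; apply (Rmult_eq_reg_l c); lra). }
  intros HbT' Hax.
  assert (Hsabs : Rabs sg = 1) by (apply sg_abs; auto).
  assert (Hxa_case : x a = 0 \/ (x a <> 0 /\ p a = 0)).
  { destruct (Req_dec (x a) 0); [left; auto|right; split; auto].
    destruct Hax as [Ha'|E]; [|contradiction]. destruct (Hend_a Ha'); [auto|contradiction]. }
  destruct Hxa_case as [Exa|[Exa Epa]].
  -
    assert (Hxb : x b = sg * (b - a)) by (rewrite Hlin by lra; rewrite Exa; ring).
    assert (Hpb : p b = 0).
    { destruct (Hend_b HbT') as [?|E]; auto. exfalso. rewrite Hxb in E.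
      apply Rmult_integral in E. destruct E; [rewrite H in Hsg2; lra|lra]. }
    pose proof (HpA b ltac:(lra) Hpb). rewrite Hxb, Rabs_mult, Hsabs, Rabs_right in H by lra.
    split; [lra|]. left. intros t Ht. rewrite Hlin by lra. rewrite Exa, Rplus_0_l, Rabs_mult, Hsabs, Rabs_right by lra. ring.
  - assert (HxA : Rabs (x a) = A) by (apply HpA; auto; lra).
    destruct (Hend_b HbT') as [Epb|Exb].
    + exfalso. pose proof (HpA b ltac:(lra) Epb). rewrite Hlin in H by lra.
      assert (x a + sg * (b - a) = - x a).
      { revert H HxA. unfold Rabs. repeat destruct Rcase_abs; intros; try lra.
        - assert (sg * (b - a) = 0) by lra. apply Rmult_integral in H0. destruct H0; [rewrite H0 in Hsg2|]; lra.
        - assert (sg * (b - a) = 0) by lra. apply Rmult_integral in H0. destruct H0; [rewrite H0 in Hsg2|]; lra. }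
      destruct (Hin m Hm) as [_ Hxm]. apply Hxm. rewrite Hlin by lra. unfold m. lra.
    + rewrite Hlin in Exb by lra.
      assert (Hxt : forall t, a <= t <= b -> x t = sg * (t - b)).
      { intros t Ht. rewrite Hlin by lra. lra. }
      split.
      * rewrite Hxt in HxA by lra. rewrite Rabs_mult, Hsabs, Rabs_left1 in HxA by lra. lra.
      * right. intros t Ht. rewrite Hxt by lra. rewrite Rabs_mult, Hsabs, Rabs_left1 by lra. ring.
Qed.

Definition marc T x p q (e : R * R) := maximal_regular_arc T x p q (fst e) (snd e).

Lemma disjoint_arcs : forall T x p q e e', marc T x p q e -> marc T x p q e' -> e <> e' ->
  snd e <= fst e' \/ snd e' <= fst e.
Proof.
  intros T x p q [a b] [a' b'] [Ha [Hab [Hb [Hr Hm]]]] [Ha' [Hab' [Hb' [Hr' Hm']]]] Hne. simpl in *.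
  apply NNPP. intro Hn.
  assert (Ho : a' < b /\ a < b') by lra.
  set (c := Rmin a a'). set (d := Rmax b b').
  assert (Hreg : regular_on x p q c d).
  { intros t [Ht1 Ht2]. unfold c, d in *.
    pose proof (Rmin_l a a'). pose proof (Rmin_r a a'). pose proof (Rmax_l b b'). pose proof (Rmax_r b b').
    destruct (Rlt_dec a t); destruct (Rlt_dec t b).
    - apply Hr; lra.
    - apply Hr'. split; [lra|]. unfold Rmax in Ht2. destruct Rle_dec; lra.
    - apply Hr'. split; [unfold Rmin in Ht1; destruct Rle_dec; lra|lra].
    - lra. }
  assert (Hc : 0 <= c) by (unfold c; apply Rmin_glb; lra).
  assert (Hd : d <= T) by (unfold d; apply Rmax_lub; lra).
  destruct (classic ((c, d) = (a, b))) as [E|E].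
  - injection E; intros E2 E1. apply (Hm' c d); auto.
    + unfold c; apply Rmin_r.
    + unfold d; apply Rmax_r.
    + rewrite E1, E2. auto.
  - apply (Hm c d); auto; [unfold c; apply Rmin_l|unfold d; apply Rmax_l].
Qed.

Lemma noninterior : forall T x p q e, marc T x p q e -> ~ (0 < fst e /\ snd e < T) ->
  fst e = 0 \/ snd e = T.
Proof.
  intros T x p q e [Ha [Hab [Hb _]]] Hn. destruct (Req_dec (fst e) 0); [left; auto|right].
  apply NNPP; intro. apply Hn; split; lra.
Qed.

Lemma NI : forall T x p q e e', marc T x p q e -> marc T x p q e' -> e <> e' ->
  ~ (fst e = 0 /\ fst e' = 0) /\ ~ (snd e = T /\ snd e' = T).
Proof.
  intros T x p q e e' H1 H2 Hne. pose proof (disjoint_arcs T x p q e e' H1 H2 Hne).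
  destruct H1 as [Ha [Hab [Hb _]]]. destruct H2 as [Ha' [Hab' [Hb' _]]].
  split; intros [E1 E2]; lra.
Qed.

Lemma NI3 : forall T x p q e1 e2 e3, marc T x p q e1 -> marc T x p q e2 -> marc T x p q e3 ->
  e1 <> e2 -> e1 <> e3 -> e2 <> e3 ->
  ~ (0 < fst e1 /\ snd e1 < T) -> ~ (0 < fst e2 /\ snd e2 < T) -> ~ (0 < fst e3 /\ snd e3 < T) -> False.
Proof.
  intros T x p q e1 e2 e3 M1 M2 M3 D12 D13 D23 N1 N2 N3.
  destruct (NI T x p q e1 e2 M1 M2 D12) as [A12 B12].
  destruct (NI T x p q e1 e3 M1 M3 D13) as [A13 B13].
  destruct (NI T x p q e2 e3 M2 M3 D23) as [A23 B23].
  destruct (noninterior T x p q e1 M1 N1); destruct (noninterior T x p q e2 M2 N2);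
  destruct (noninterior T x p q e3 M3 N3); tauto.
Qed.

Lemma ctx : forall T x y u1 u2 p q arcs, regular_bang_bang T x y u1 u2 p q arcs -> arcs <> nil ->
  exists c l0 (N0 : R -> Prop), 0 < T /\ (forall t, 0 <= t <= T -> q t = c) /\ wcont T p /\ wcont T x /\
    abs_cont_on T x /\ (forall t, 0 <= t <= T -> Rabs (p t) + Rabs c * Rabs (x t) = l0) /\ null_set N0 /\
    (forall t, 0 <= t <= T -> ~ N0 t -> Rabs (u1 t) <= 1 /\ Rabs (u2 t) <= 1 /\
     (0 < t < T -> derivable_pt_lim x t (u1 t * 1 + u2 t * 0)) /\
     u1 t * p t + u2 t * (q t * x t) = Rabs (p t) + Rabs (q t * x t)) /\
    admissible T x y u1 u2 /\ Forall (marc T x p q) arcs.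
Proof.
  intros T x y u1 u2 p q arcs [Hext [Hnd [Hall _]]] Hne.
  destruct Hext as [Had [Hpac [Hqac [Hnv [Hder [l0 [Hl0 Hham]]]]]]].
  pose proof Had as Had'.
  destruct Had as [HT [Hxac [Hyac [_ [_ [Hbnd Hxder]]]]]].
  assert (HT0 : 0 < T).
  { destruct arcs as [|e r]; [contradiction|]. inversion Hall; subst.
    destruct H1 as [? [? [? _]]]. lra. }
  assert (Hq : forall t, 0 <= t <= T -> q t = q 0).
  { destruct Hder as [N [HN HP]]. intros t Ht.
    assert (Rabs (q t - q 0) <= (fun _ => 0) t - (fun _ => 0) 0).
    { apply (deriv_abs_le 0 t q (fun _ => 0) 0 N); try lra; auto.
      - apply (abs_cont_restrict T); auto; lra.
      - intros; rewrite Rminus_diag, Rabs_R0; lra.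
      - intros s Hs Hn. destruct (HP s ltac:(lra) Hn ltac:(lra)) as [_ Hd].
        exists (- 0), 0. split; auto. split; [|rewrite Ropp_0, Rabs_R0; lra].
        apply (deriv_loc (fct_cte 0) _ _ 0); [apply derivable_pt_lim_const| |auto].
        exists 1; split; [lra|]. intros; unfold fct_cte; auto. }
    simpl in H. apply abs_le_inv in H. lra. }
  set (c := q 0).
  assert (Hpw := abs_cont_wcont T p Hpac). assert (Hxw := abs_cont_wcont T x Hxac).
  destruct (ae_and _ _ _ Hbnd (ae_and _ _ _ Hxder Hham)) as [N0 [HN0 HP0]].
  exists c, l0, N0. split; auto. split; auto. split; auto. split; auto. split; auto.
  split; [|split; auto; split; [|split; auto]].
  - apply (ae_cont_eq T (fun t => Rabs (p t) + Rabs c * Rabs (x t)) l0 HT0); [apply wcont_comb; auto|].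
    exists N0. split; auto. intros t Ht Hn. destruct (HP0 t Ht Hn) as [_ [_ [_ H]]].
    unfold phi1, phi2 in H. rewrite Hq in H by auto. rewrite Rabs_mult in H. auto.
  - intros t Ht Hn. destruct (HP0 t Ht Hn) as [[H1 H2] [H3 [H4 H5]]]. unfold phi1, phi2 in *.
    split; auto. split; auto. split; [intros; apply H3; auto|]. lra.
Qed.

Lemma two_full : forall T x y u1 u2 p q A e e', admissible T x y u1 u2 -> 0 < A ->
  (forall t, 0 <= t <= T -> Rabs (x t) <= A) -> marc T x p q e -> marc T x p q e' -> e <> e' ->
  full x A (fst e) (snd e) -> full x A (fst e') (snd e') -> 0 < fst e -> snd e < T ->
  ~ time_minimizer T x y.
Proof.
  intros T x y u1 u2 p q A e e' Had HA HxA M M' Hne F F' Hi1 Hi2.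
  destruct (disjoint_arcs T x p q e e' M M' Hne) as [D|D].
  - pose proof F as [E _]. pose proof F' as [E' _]. pose proof M' as [? [? [? _]]].
    apply (key_prop T x y u1 u2 A (fst e) (snd e) (fst e') (snd e')); auto; lra.
  - pose proof F as [E _]. pose proof F' as [E' _]. pose proof M' as [? [? [? _]]].
    apply (key_prop T x y u1 u2 A (fst e') (snd e') (fst e) (snd e)); auto; lra.
Qed.

Theorem mainTheorem11 :
  (forall (T : R) (x y u1 u2 p q : R -> R) (arcs : list (R * R)),
     regular_bang_bang T x y u1 u2 p q arcs ->
     (3 < length arcs)%nat ->
     ~ time_minimizer T x y) /\
  (forall (T : R) (x y u1 u2 p q : R -> R) (arcs : list (R * R)),
     regular_bang_bang T x y u1 u2 p q arcs ->
     x 0 = 0 ->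
     time_minimizer T x y ->
     (length arcs <= 2)%nat).
Proof.
  split.
  - intros T x y u1 u2 p q arcs Hr Hlen Hmin.
    assert (Hne : arcs <> nil) by (intro E; subst; simpl in Hlen; lia).
    destruct (ctx T x y u1 u2 p q arcs Hr Hne) as
      [c [l0 [N0 [HT0 [Hq [Hpw [Hxw [Hxac [HH [HN0 [HF [Had Hall]]]]]]]]]]]].
    destruct Hr as [_ [Hnd _]].
    destruct arcs as [|e1 [|e2 [|e3 [|e4 rest]]]]; simpl in Hlen; try lia.
    inversion Hall as [|? ? M1 Hall1]; subst. inversion Hall1 as [|? ? M2 Hall2]; subst.
    inversion Hall2 as [|? ? M3 Hall3]; subst. inversion Hall3 as [|? ? M4 Hall4]; subst.
    inversion Hnd as [|? ? N1 Hnd1]; subst. inversion Hnd1 as [|? ? N2 Hnd2]; subst.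
    inversion Hnd2 as [|? ? N3 Hnd3]; subst.
    assert (D12 : e1 <> e2) by (intro E; apply N1; left; auto).
    assert (D13 : e1 <> e3) by (intro E; apply N1; right; left; auto).
    assert (D14 : e1 <> e4) by (intro E; apply N1; right; right; left; auto).
    assert (D23 : e2 <> e3) by (intro E; apply N2; left; auto).
    assert (D24 : e2 <> e4) by (intro E; apply N2; right; left; auto).
    assert (D34 : e3 <> e4) by (intro E; apply N3; left; auto).
    destruct (arc_full T x p q u1 u2 c l0 N0 (fst e1) (snd e1) HT0 Hq Hpw Hxw Hxac HH HN0 HF M1)
      as [Hc [Hl0 _]].
    set (A := l0 / Rabs c).
    assert (HcA : 0 < Rabs c) by (apply Rabs_pos_lt; auto).
    assert (HA : 0 < A) by (unfold A; apply Rdiv_lt_0_compat; auto).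
    assert (HxA : forall t, 0 <= t <= T -> Rabs (x t) <= A).
    { intros t Ht. pose proof (HH t Ht). pose proof (Rabs_pos (p t)). unfold A.
      apply (Rmult_le_reg_l (Rabs c)); auto. field_simplify; lra. }
    assert (GF : forall e, marc T x p q e -> 0 < fst e /\ snd e < T -> full x A (fst e) (snd e)).
    { intros e Me [Hi1 Hi2]. destruct (arc_full T x p q u1 u2 c l0 N0 (fst e) (snd e) HT0 Hq Hpw Hxw Hxac HH HN0 HF Me)
        as [_ [_ Hf]]. apply Hf; auto. }
    destruct (classic (0 < fst e1 /\ snd e1 < T)) as [i1|n1];
    destruct (classic (0 < fst e2 /\ snd e2 < T)) as [i2|n2];
    destruct (classic (0 < fst e3 /\ snd e3 < T)) as [i3|n3];
    destruct (classic (0 < fst e4 /\ snd e4 < T)) as [i4|n4];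
    first
      [ solve [apply (two_full T x y u1 u2 p q A e1 e2); auto; tauto]
      | solve [apply (two_full T x y u1 u2 p q A e1 e3); auto; tauto]
      | solve [apply (two_full T x y u1 u2 p q A e1 e4); auto; tauto]
      | solve [apply (two_full T x y u1 u2 p q A e2 e3); auto; tauto]
      | solve [apply (two_full T x y u1 u2 p q A e2 e4); auto; tauto]
      | solve [apply (two_full T x y u1 u2 p q A e3 e4); auto; tauto]
      | solve [exfalso; apply (NI3 T x p q e1 e2 e3); auto]
      | solve [exfalso; apply (NI3 T x p q e1 e2 e4); auto]
      | solve [exfalso; apply (NI3 T x p q e1 e3 e4); auto]
      | solve [exfalso; apply (NI3 T x p q e2 e3 e4); auto] ].
  - intros T x y u1 u2 p q arcs Hr Hx0 Hmin.
    destruct (le_lt_dec (length arcs) 2) as [Hl|Hlen]; auto. exfalso.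
    assert (Hne : arcs <> nil) by (intro E; subst; simpl in Hlen; lia).
    destruct (ctx T x y u1 u2 p q arcs Hr Hne) as
      [c [l0 [N0 [HT0 [Hq [Hpw [Hxw [Hxac [HH [HN0 [HF [Had Hall]]]]]]]]]]]].
    destruct Hr as [_ [Hnd _]].
    destruct arcs as [|e1 [|e2 [|e3 rest]]]; simpl in Hlen; try lia.
    inversion Hall as [|? ? M1 Hall1]; subst. inversion Hall1 as [|? ? M2 Hall2]; subst.
    inversion Hall2 as [|? ? M3 Hall3]; subst.
    inversion Hnd as [|? ? N1 Hnd1]; subst. inversion Hnd1 as [|? ? N2 Hnd2]; subst.
    assert (D12 : e1 <> e2) by (intro E; apply N1; left; auto).
    assert (D13 : e1 <> e3) by (intro E; apply N1; right; left; auto).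
    assert (D23 : e2 <> e3) by (intro E; apply N2; left; auto).
    assert (D21 := not_eq_sym D12). assert (D31 := not_eq_sym D13). assert (D32 := not_eq_sym D23).
    destruct (arc_full T x p q u1 u2 c l0 N0 (fst e1) (snd e1) HT0 Hq Hpw Hxw Hxac HH HN0 HF M1)
      as [Hc [Hl0 _]].
    set (A := l0 / Rabs c).
    assert (HcA : 0 < Rabs c) by (apply Rabs_pos_lt; auto).
    assert (HA : 0 < A) by (unfold A; apply Rdiv_lt_0_compat; auto).
    assert (HxA : forall t, 0 <= t <= T -> Rabs (x t) <= A).
    { intros t Ht. pose proof (HH t Ht). pose proof (Rabs_pos (p t)). unfold A.
      apply (Rmult_le_reg_l (Rabs c)); auto. field_simplify; lra. }
    assert (GF : forall e, marc T x p q e -> snd e < T -> (0 < fst e \/ x (fst e) = 0) ->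
                   full x A (fst e) (snd e)).
    { intros e Me Hi1 Hi2. destruct (arc_full T x p q u1 u2 c l0 N0 (fst e) (snd e) HT0 Hq Hpw Hxw Hxac HH HN0 HF Me)
        as [_ [_ Hf]]. apply Hf; auto. }
    assert (K1 : forall e ej ek, marc T x p q e -> marc T x p q ej -> marc T x p q ek ->
               e <> ej -> e <> ek -> ej <> ek ->
               (0 < fst e /\ snd e < T) -> ~ (0 < fst ej /\ snd ej < T) -> ~ (0 < fst ek /\ snd ek < T) -> False).
    { intros e ej ek Me Mj Mk Dj Dk Djk Ie Nj Nk.
      destruct (NI T x p q ej ek Mj Mk Djk) as [NL NR].
      assert (Fin : forall eL eR, marc T x p q eL -> marc T x p q eR -> eL <> eR -> e <> eL ->
                      fst eL = 0 -> snd eR = T -> False).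
      { intros eL eR ML MR DLR DeL HL HR.
        destruct (NI T x p q eL eR ML MR DLR) as [_ NR'].
        assert (snd eL < T) by (pose proof ML as [_ [_ [? _]]]; destruct (Req_dec (snd eL) T); [tauto|lra]).
        apply (two_full T x y u1 u2 p q A e eL); auto; try tauto.
        - apply GF; auto; tauto.
        - apply GF; auto. right. rewrite HL. auto. }
      destruct (noninterior T x p q ej Mj Nj) as [Lj|Rj];
      destruct (noninterior T x p q ek Mk Nk) as [Lk|Rk]; try tauto.
      - apply (Fin ej ek); auto.
      - apply (Fin ek ej); auto. }
    destruct (classic (0 < fst e1 /\ snd e1 < T)) as [i1|n1];
    destruct (classic (0 < fst e2 /\ snd e2 < T)) as [i2|n2];
    destruct (classic (0 < fst e3 /\ snd e3 < T)) as [i3|n3];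
    first
      [ solve [apply (two_full T x y u1 u2 p q A e1 e2); auto; try apply GF; auto; tauto]
      | solve [apply (two_full T x y u1 u2 p q A e1 e3); auto; try apply GF; auto; tauto]
      | solve [apply (two_full T x y u1 u2 p q A e2 e3); auto; try apply GF; auto; tauto]
      | solve [apply (NI3 T x p q e1 e2 e3); auto]
      | solve [apply (K1 e1 e2 e3); auto]
      | solve [apply (K1 e2 e1 e3); auto]
      | solve [apply (K1 e3 e1 e2); auto] ].
Qed.
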